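(* Let $\mathcal{T}\subset\mathcal{D}$ be a tree and $\mu,\nu$ finite Borel measures on $[0,1)$ such that (A) $\mu(\mathbf{Top}(\mathcal{T}))>0$ and $\nu(\mathbf{Top}(\mathcal{T}))>0$, and (B) both $\mu$ and $\nu$ are $(\mathcal{T},D)$-doubling for some $D\ge1$. Define $$\nu_{\mathcal{T}} := \nu|_{\partial\mathcal{T}} + \sum_{I\in\mathbf{Leaves}(\mathcal{T})}\frac{\nu(I)}{\mu(I)}\,\mu|_I.$$ If $$\sum_{I\in\mathcal{T}\setminus\mathbf{Leaves}(\mathcal{T})}\Delta^2_{\mu,\nu}(I)\mu(I)<\infty,$$ then $\mu|_{\mathbf{Top}(\mathcal{T})}\ll\nu_{\mathcal{T}}$. In particular $\mu|_{\partial\mathcal{T}}\ll\nu$.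
   Context: $\mathcal{D}$: dyadic intervals $[j2^{-k},(j+1)2^{-k})\subset[0,1)$, $k\ge0$; $\hat I$ is the parent of $I$, and $I_-,I_+$ are the left and right halves of $I$. $\Delta_{\mu,\nu}(I) := |\mu(I_-)/\mu(I) - \nu(I_-)/\nu(I)|$. A tree is a family $\mathcal{T}\subset\mathcal{D}$ that is coherent (if $Q,R\in\mathcal{T}$, $P\in\mathcal{D}$, $Q\subset P\subset R$, then $P\in\mathcal{T}$), has a unique largest element $\mathbf{Top}(\mathcal{T})$, and in which every $I\in\mathcal{T}$ has either $0$ or $2$ children in $\mathcal{T}$. $\mathbf{Leaves}(\mathcal{T})$ is the set of $I\in\mathcal{T}$ with no children in $\mathcal{T}$ (also used for the union of these intervals), and $\partial\mathcal{T} := \mathbf{Top}(\mathcal{T})\setminus\bigcup\mathbf{Leaves}(\mathcal{T})$. A measure $\sigma$ is $(\mathcal{T},D)$-doubling if $\sigma(\hat I)\le D\sigma(I)$ for all $I\in\mathcal{T}\setminus\{\mathbf{Top}(\mathcal{T})\}$ (under (A),(B), $\mu(I),\nu(I)>0$ for all $I\in\mathcal{T}$). *)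

(* Defs.v *)
From Stdlib Require Import Reals Lra Lia ClassicalEpsilon.
Open Scope R_scope.

Definition dyad (k j : nat) : R -> Prop :=
  fun x => INR j / 2 ^ k <= x < (INR j + 1) / 2 ^ k.

Definition valid (k j : nat) : Prop := (j < 2 ^ k)%nat.

Definition incl (A B : R -> Prop) : Prop := forall x, A x -> B x.
Definition inter (A B : R -> Prop) : R -> Prop := fun x => A x /\ B x.

Inductive Borel : (R -> Prop) -> Prop :=
| Borel_dyad : forall k j, valid k j -> Borel (dyad k j)
| Borel_compl : forall A, Borel A -> Borel (fun x => 0 <= x < 1 /\ ~ A x)
| Borel_union : forall A : nat -> R -> Prop,
    (forall n, Borel (A n)) -> Borel (fun x => exists n, A n x).

Definition finite_measure (m : (R -> Prop) -> R) : Prop :=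
  (forall A, Borel A -> 0 <= m A) /\
  (forall A : nat -> R -> Prop,
     (forall n, Borel (A n)) ->
     (forall n p x, n <> p -> A n x -> A p x -> False) ->
     infinite_sum (fun n => m (A n)) (m (fun x => exists n, A n x))).

(* Trees of dyadic intervals, encoded as predicates on index pairs (k,j). *)
Definition children_in (T : nat -> nat -> Prop) (k j : nat) : Prop :=
  T (S k) (2 * j)%nat /\ T (S k) (2 * j + 1)%nat.

Definition is_tree (T : nat -> nat -> Prop) (kt jt : nat) : Prop :=
  (forall k j, T k j -> valid k j) /\
  (forall k1 j1 k2 j2 k j, T k1 j1 -> T k2 j2 -> valid k j ->
     incl (dyad k1 j1) (dyad k j) -> incl (dyad k j) (dyad k2 j2) -> T k j) /\
  (* (kt,jt) = Top(T) is the (unique) largest element *)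
  T kt jt /\ (forall k j, T k j -> incl (dyad k j) (dyad kt jt)) /\
  (forall k j, T k j -> (T (S k) (2 * j)%nat <-> T (S k) (2 * j + 1)%nat)).

Definition leaf (T : nat -> nat -> Prop) (k j : nat) : Prop :=
  T k j /\ ~ T (S k) (2 * j)%nat /\ ~ T (S k) (2 * j + 1)%nat.

Definition leaves_union (T : nat -> nat -> Prop) : R -> Prop :=
  fun x => exists k j, leaf T k j /\ dyad k j x.

Definition boundary (T : nat -> nat -> Prop) (kt jt : nat) : R -> Prop :=
  fun x => dyad kt jt x /\ ~ leaves_union T x.

(* (T,D)-doubling: sigma(parent I) <= D sigma(I) for I in T \ {Top};
   the parent of I_{k,j} (k >= 1) is I_{k-1, j/2}. *)
Definition doubling (s : (R -> Prop) -> R) (T : nat -> nat -> Prop)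
  (kt jt : nat) (D : R) : Prop :=
  forall k j, T k j -> (k, j) <> (kt, jt) ->
    s (dyad (k - 1) (j / 2)) <= D * s (dyad k j).

(* Delta_{mu,nu}(I) with I_- the left half *)
Definition Delta (mu nu : (R -> Prop) -> R) (k j : nat) : R :=
  Rabs (mu (dyad (S k) (2 * j)%nat) / mu (dyad k j)
        - nu (dyad (S k) (2 * j)%nat) / nu (dyad k j)).

Fixpoint sumR (n : nat) (f : nat -> R) : R :=
  match n with O => 0 | S n' => sumR n' f + f n' end.

Definition indic (P : Prop) (v : R) : R :=
  if excluded_middle_informative P then v else 0.

Definition series (u : nat -> R) : R :=
  epsilon (inhabits 0) (fun l => infinite_sum u l).

(* level-k part of the sum over I in T \ Leaves(T) of Delta^2(I) mu(I) *)
Definition energy_level (mu nu : (R -> Prop) -> R) (T : nat -> nat -> Prop)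
  (k : nat) : R :=
  sumR (2 ^ k) (fun j => indic (T k j /\ ~ leaf T k j)
                         (Delta mu nu k j ^ 2 * mu (dyad k j))).

Definition nuT (mu nu : (R -> Prop) -> R) (T : nat -> nat -> Prop)
  (kt jt : nat) (B : R -> Prop) : R :=
  nu (inter B (boundary T kt jt)) +
  series (fun k => sumR (2 ^ k) (fun j =>
     indic (leaf T k j) (nu (dyad k j) / mu (dyad k j) * mu (inter B (dyad k j))))).

Definition abs_cont (m1 m2 : (R -> Prop) -> R) : Prop :=
  forall B, Borel B -> m2 B = 0 -> m1 B = 0.

Definition restrict (m : (R -> Prop) -> R) (A : R -> Prop) : (R -> Prop) -> R :=
  fun B => m (inter B A).

(* Main.v *)
Require Import Defs.
From Stdlib Require Import Reals Lra Lia ClassicalEpsilon FunctionalExtensionality PropExtensionality Classical.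
Open Scope R_scope.

Lemma set_ext (A B : R -> Prop) : (forall x, A x <-> B x) -> A = B.
Proof. intros H; apply functional_extensionality; intros x; apply propositional_extensionality; auto. Qed.

Lemma pow2_pos k : 0 < 2 ^ k.
Proof. apply pow_lt; lra. Qed.

Lemma dyad_iff k j x : dyad k j x <-> INR j <= x * 2 ^ k < INR j + 1.
Proof.
  unfold dyad. pose proof (pow2_pos k) as Hp.
  set (p := 2 ^ k) in *.
  assert (E1: INR j / p * p = INR j) by (field; lra).
  assert (E2: (INR j + 1) / p * p = INR j + 1) by (field; lra).
  split; intros [H1 H2]; split.
  - rewrite <- E1. apply Rmult_le_compat_r; lra.
  - rewrite <- E2. apply Rmult_lt_compat_r; lra.
  - apply Rmult_le_reg_r with p; [lra|]. rewrite E1; lra.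
  - apply Rmult_lt_reg_r with p; [lra|]. rewrite E2; lra.
Qed.

Lemma dyad_uniq k j j' x : dyad k j x -> dyad k j' x -> j = j'.
Proof.
  rewrite !dyad_iff; intros [H1 H2] [H3 H4].
  destruct (Nat.lt_trichotomy j j') as [Hl|[He|Hl]]; auto.
  - assert (INR (S j) <= INR j') by (apply le_INR; lia). rewrite S_INR in H. lra.
  - assert (INR (S j') <= INR j) by (apply le_INR; lia). rewrite S_INR in H. lra.
Qed.

Lemma dyad_parent k j x : dyad (S k) j x -> dyad k (j / 2) x.
Proof.
  rewrite !dyad_iff. simpl pow. intros [H1 H2].
  pose proof (Nat.div_mod_eq j 2) as Hj.
  pose proof (Nat.mod_upper_bound j 2 ltac:(lia)) as Hr.
  set (q := (j / 2)%nat) in *. set (r := (j mod 2)%nat) in *.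
  assert (INR j = 2 * INR q + INR r) by (rewrite Hj, plus_INR, mult_INR; simpl; lra).
  assert (INR r <= 1) by (replace 1 with (INR 1) by reflexivity; apply le_INR; lia).
  assert (0 <= INR r) by apply pos_INR.
  split; nra.
Qed.

Lemma dyad_child k j x : dyad k j x -> dyad (S k) (2 * j) x \/ dyad (S k) (2 * j + 1) x.
Proof.
  rewrite !dyad_iff. simpl pow. intros [H1 H2].
  rewrite plus_INR, mult_INR. simpl INR.
  destruct (Rlt_le_dec (x * (2 * 2 ^ k)) (2 * INR j + 1)); [left|right]; split; nra.
Qed.

Lemma dyad_child_parent k j x : dyad (S k) (2*j) x \/ dyad (S k) (2*j+1) x -> dyad k j x.
Proof.
  intros [H|H]; apply dyad_parent in H;
  [replace (2*j/2)%nat with j in H | replace ((2*j+1)/2)%nat with j in H]; auto.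
  - rewrite Nat.mul_comm, Nat.div_mul; lia.
  - rewrite Nat.mul_comm, Nat.div_add_l by lia. simpl; lia.
Qed.

Lemma dyad_exists x k : 0 <= x < 1 -> exists j, valid k j /\ dyad k j x.
Proof.
  intros Hx. induction k.
  - exists 0%nat. split. unfold valid; simpl; lia. rewrite dyad_iff. simpl. lra.
  - destruct IHk as [j [Hv Hd]]. unfold valid in *.
    destruct (dyad_child _ _ _ Hd); eexists; split; eauto; simpl; lia.
Qed.

Lemma dyad_valid k j x : dyad k j x -> x < 1 -> valid k j.
Proof.
  rewrite dyad_iff. intros [H1 H2] H. unfold valid.
  apply INR_lt. rewrite pow_INR. simpl INR.
  pose proof (pow2_pos k).
  assert (x * 2 ^ k < 1 * 2 ^ k) by (apply Rmult_lt_compat_r; lra). replace (1+1) with 2 by lra. lra.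
Qed.

Lemma dyad_01 k j x : valid k j -> dyad k j x -> 0 <= x < 1.
Proof.
  unfold valid. rewrite dyad_iff. intros Hv [H1 H2].
  pose proof (pos_INR j). pose proof (pow2_pos k).
  assert (INR (S j) <= INR (2 ^ k)) by (apply le_INR; lia).
  rewrite S_INR, pow_INR in H3. simpl in H3. replace (1+1) with 2 in H3 by lra.
  split.
  - destruct (Rlt_le_dec x 0); [|lra].
    assert (x * 2 ^ k < 0 * 2 ^ k) by (apply Rmult_lt_compat_r; lra). lra.
  - destruct (Rlt_le_dec x 1); [lra|].
    assert (1 * 2 ^ k <= x * 2 ^ k) by (apply Rmult_le_compat_r; lra). lra.
Qed.

Lemma dyad_nest d k j x : dyad (k + d) j x -> dyad k (j / 2 ^ d) x.
Proof.
  revert j. induction d; intros j H.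
  - rewrite Nat.add_0_r in H. replace (j / 2 ^ 0)%nat with j; auto. symmetry. apply Nat.div_1_r.
  - rewrite Nat.add_succ_r in H. apply dyad_parent, IHd in H.
    rewrite Nat.Div0.div_div in H. rewrite Nat.pow_succ_r'. auto.
Qed.

Lemma dyad_meet k j k' j' x : (k' <= k)%nat -> dyad k j x -> dyad k' j' x ->
  incl (dyad k j) (dyad k' j').
Proof.
  intros Hk H1 H2 y Hy.
  replace k with (k' + (k - k'))%nat in H1, Hy by lia.
  apply dyad_nest in H1. apply dyad_nest in Hy.
  rewrite (dyad_uniq _ _ _ _ H2 H1). auto.
Qed.

Lemma dyad_point k j : dyad k j (INR j / 2 ^ k).
Proof. rewrite dyad_iff. pose proof (pow2_pos k).
  replace (INR j / 2 ^ k * 2 ^ k) with (INR j) by (field; lra). lra. Qed.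

Lemma Borel_ext A B : Borel A -> (forall x, A x <-> B x) -> Borel B.
Proof. intros H E. rewrite <- (set_ext _ _ E). auto. Qed.

Lemma Borel_sub01 A : Borel A -> forall x, A x -> 0 <= x < 1.
Proof.
  induction 1; intros x Hx.
  - eapply dyad_01; eauto.
  - tauto.
  - destruct Hx as [n Hn]. eauto.
Qed.

Lemma Borel_full : Borel (fun x => 0 <= x < 1).
Proof.
  eapply Borel_ext. apply (Borel_dyad 0 0). unfold valid; simpl; lia.
  intros x. rewrite dyad_iff. simpl. lra.
Qed.

Lemma Borel_empty : Borel (fun _ => False).
Proof.
  eapply Borel_ext. apply Borel_compl, Borel_full. intros x; tauto.
Qed.

Lemma Borel_union2 A B : Borel A -> Borel B -> Borel (fun x => A x \/ B x).
Proof.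
  intros HA HB.
  eapply Borel_ext. apply (Borel_union (fun n => match n with O => A | _ => B end)).
  intros [|n]; auto.
  intros x; split.
  - intros [[|n] H]; auto.
  - intros [H|H]; [exists O | exists 1%nat]; auto.
Qed.

Lemma Borel_inter A B : Borel A -> Borel B -> Borel (fun x => A x /\ B x).
Proof.
  intros HA HB.
  eapply Borel_ext. apply Borel_compl, (Borel_union2 (fun x => 0<=x<1 /\ ~A x) (fun x => 0<=x<1 /\ ~B x)); apply Borel_compl; eauto.
  intros x; split.
  - intros [H1 H2]. cbv beta in *. split; apply NNPP; tauto.
  - intros [H1 H2]. pose proof (Borel_sub01 _ HA _ H1). split; auto. tauto.
Qed.

Lemma Borel_diff A B : Borel A -> Borel B -> Borel (fun x => A x /\ ~ B x).
Proof.
  intros HA HB. eapply Borel_ext. apply Borel_inter. apply HA. apply Borel_compl, HB.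
  intros x; split. tauto. intros [H1 H2]. pose proof (Borel_sub01 _ HA _ H1). tauto.
Qed.

Lemma Borel_finunion n (F : nat -> R -> Prop) :
  (forall i, (i < n)%nat -> Borel (F i)) -> Borel (fun x => exists i, (i < n)%nat /\ F i x).
Proof.
  intros H. eapply Borel_ext.
  apply (Borel_union (fun i => if Compare_dec.lt_dec i n then F i else fun _ => False)).
  intros i. destruct (Compare_dec.lt_dec i n); auto. apply Borel_empty.
  intros x; split.
  - intros [i Hi]. destruct (Compare_dec.lt_dec i n); eauto. tauto.
  - intros [i [Hi Hx]]. exists i. destruct (Compare_dec.lt_dec i n); auto; lia.
Qed.

Lemma Borel_level k (P : nat -> Prop) :
  Borel (fun x => exists j, P j /\ valid k j /\ dyad k j x).
Proof.
  eapply Borel_ext.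
  apply (Borel_finunion (2 ^ k) (fun j x => P j /\ dyad k j x)).
  intros i Hi. destruct (classic (P i)).
  eapply Borel_ext. apply (Borel_dyad k i Hi). intros; tauto.
  eapply Borel_ext. apply Borel_empty. intros; tauto.
  intros x; split.
  - intros [i [Hi H]]. exists i. unfold valid. tauto.
  - intros [i H]. exists i. unfold valid in H. tauto.
Qed.

Lemma Borel_levels (P : nat -> nat -> Prop) :
  Borel (fun x => exists k j, P k j /\ valid k j /\ dyad k j x).
Proof.
  eapply Borel_ext. apply (Borel_union (fun k x => exists j, P k j /\ valid k j /\ dyad k j x)).
  intros k; apply Borel_level.
  intros x; tauto.
Qed.

Lemma sum_f_R0_ext s1 s2 n : (forall i, (i <= n)%nat -> s1 i = s2 i) -> sum_f_R0 s1 n = sum_f_R0 s2 n.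
Proof.
  induction n; intros H; simpl. apply H; lia. rewrite IHn by (intros; apply H; lia). rewrite H; auto.
Qed.

Lemma infsum_eventually s l c N :
  (forall n, (n >= N)%nat -> sum_f_R0 s n = c) -> infinite_sum s l -> l = c.
Proof.
  intros H Hs. destruct (Req_dec l c) as [e|ne]; auto.
  destruct (Hs (Rabs (l - c))) as [M HM]. apply Rabs_pos_lt; lra.
  specialize (HM (N + M)%nat ltac:(lia)). rewrite H in HM by lia.
  unfold R_dist in HM. rewrite Rabs_minus_sym in HM. lra.
Qed.

Lemma infsum_le s l M : infinite_sum s l -> (forall n, sum_f_R0 s n <= M) -> l <= M.
Proof.
  intros Hs H. destruct (Rle_dec l M) as [|ne]; auto.
  destruct (Hs (l - M)) as [N HN]. lra.
  specialize (HN N ltac:(lia)). specialize (H N).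
  unfold R_dist in HN. apply Rabs_def2 in HN. lra.
Qed.

Lemma meas_nonneg m : finite_measure m -> forall A, Borel A -> 0 <= m A.
Proof. intros [H _]; auto. Qed.

Lemma meas_empty m : finite_measure m -> m (fun _ => False) = 0.
Proof.
  intros [H1 H2].
  specialize (H2 (fun _ _ => False) (fun _ => Borel_empty) ltac:(tauto)). cbv beta in H2.
  replace (fun x : R => exists _ : nat, False) with (fun _ : R => False) in H2
    by (apply set_ext; intros; split; [tauto| intros [_ []]]).
  set (c := m (fun _ => False)) in *.
  assert (forall n, sum_f_R0 (fun _ => c) n = INR (S n) * c).
  { induction n; simpl sum_f_R0. simpl; lra. rewrite IHn. rewrite (S_INR (S n)). lra. }
  destruct (Req_dec c 0) as [|ne]; auto.
  destruct (H2 (Rabs c)) as [N HN]. apply Rabs_pos_lt; auto.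
  specialize (HN (S N) ltac:(lia)). unfold R_dist in HN. rewrite H in HN.
  replace (INR (S (S N)) * c - c) with (INR (S N) * c) in HN by (rewrite (S_INR (S N)); lra).
  rewrite Rabs_mult, Rabs_pos_eq in HN by apply pos_INR.
  assert (1 <= INR (S N)) by (replace 1 with (INR 1) by reflexivity; apply le_INR; lia).
  pose proof (Rabs_pos_lt c ne). nra.
Qed.

Lemma meas_add2 m A B : finite_measure m -> Borel A -> Borel B ->
  (forall x, A x -> B x -> False) -> m (fun x => A x \/ B x) = m A + m B.
Proof.
  intros Hm HA HB Hd. pose proof Hm as [H1 H2].
  set (F := fun n => match n with O => A | 1%nat => B | _ => fun _ : R => False end).
  specialize (H2 F).
  assert (E: (fun x => exists n, F n x) = (fun x => A x \/ B x)).
  { apply set_ext; intros x; split.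
    - intros [[|[|n]] H]; simpl in H; tauto.
    - intros [H|H]; [exists O|exists 1%nat]; auto. }
  rewrite E in H2.
  eapply infsum_eventually with (N := 1%nat). 2: apply H2.
  - intros n Hn. induction n. lia. destruct n. simpl. auto.
    simpl sum_f_R0 in *. rewrite IHn by lia. simpl F. rewrite meas_empty; auto; lra.
  - intros [|[|n]]; simpl; auto using Borel_empty.
  - intros [|[|n]] [|[|p]] x Hnp; simpl; try tauto; eauto.
Qed.

Lemma meas_mono m A B : finite_measure m -> Borel A -> Borel B -> incl A B -> m A <= m B.
Proof.
  intros Hm HA HB Hi.
  replace B with (fun x => A x \/ (B x /\ ~ A x)).
  rewrite meas_add2; auto. pose proof (meas_nonneg m Hm _ (Borel_diff _ _ HB HA)). lra.
  apply Borel_diff; auto. tauto.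
  apply set_ext. intros x. split. intros [H|H]; auto. tauto.
  intros H. destruct (classic (A x)); tauto.
Qed.

Lemma meas_diff m A B : finite_measure m -> Borel A -> Borel B -> incl B A ->
  m (fun x => A x /\ ~ B x) = m A - m B.
Proof.
  intros Hm HA HB Hi.
  assert (m A = m (fun x => B x \/ (A x /\ ~ B x))).
  { f_equal. apply set_ext. intros x. split. intros H. destruct (classic (B x)); tauto.
    intros [H|H]; auto. tauto. }
  rewrite H, meas_add2; auto. lra. apply Borel_diff; auto. tauto.
Qed.

Lemma meas_sub2 m A B : finite_measure m -> Borel A -> Borel B ->
  m (fun x => A x \/ B x) <= m A + m B.
Proof.
  intros Hm HA HB.
  replace (fun x => A x \/ B x) with (fun x => A x \/ (B x /\ ~ A x)).
  rewrite meas_add2; auto. pose proof (meas_mono m (fun x => B x /\ ~ A x) B Hm (Borel_diff _ _ HB HA) HB).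
  assert (m (fun x => B x /\ ~ A x) <= m B) by (apply H; intros x; tauto). lra.
  apply Borel_diff; auto. tauto.
  apply set_ext. intros x. split. intros [H|H]; tauto. intros [H|H]; auto. destruct (classic (A x)); tauto.
Qed.

Lemma meas_finsub m n (F : nat -> R -> Prop) : finite_measure m ->
  (forall i, (i < n)%nat -> Borel (F i)) ->
  m (fun x => exists i, (i < n)%nat /\ F i x) <= sumR n (fun i => m (F i)).
Proof.
  intros Hm. induction n; intros HF; simpl.
  - replace (fun x => exists i, (i < 0)%nat /\ F i x) with (fun _ : R => False).
    rewrite meas_empty; auto. lra. apply set_ext; intros x; split. tauto. intros [i [Hi _]]; lia.
  - replace (fun x => exists i, (i < S n)%nat /\ F i x) with
      (fun x => (exists i, (i < n)%nat /\ F i x) \/ F n x).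
    eapply Rle_trans. apply meas_sub2; auto. apply Borel_finunion; intros; apply HF; lia.
    specialize (IHn ltac:(intros; apply HF; lia)). lra.
    apply set_ext; intros x; split.
    + intros [[i [Hi H]]|H]; [exists i|exists n]; split; auto.
    + intros [i [Hi H]]. destruct (Nat.eq_dec i n). subst; auto. left; exists i; split; auto; lia.
Qed.

Lemma meas_finadd m n (F : nat -> R -> Prop) : finite_measure m ->
  (forall i, (i < n)%nat -> Borel (F i)) ->
  (forall i p x, (i < n)%nat -> (p < n)%nat -> i <> p -> F i x -> F p x -> False) ->
  m (fun x => exists i, (i < n)%nat /\ F i x) = sumR n (fun i => m (F i)).
Proof.
  intros Hm. induction n; intros HF Hd; simpl.
  - replace (fun x => exists i, (i < 0)%nat /\ F i x) with (fun _ : R => False).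
    rewrite meas_empty; auto. apply set_ext; intros x; split. tauto. intros [i [Hi _]]; lia.
  - replace (fun x => exists i, (i < S n)%nat /\ F i x) with
      (fun x => (exists i, (i < n)%nat /\ F i x) \/ F n x).
    rewrite meas_add2; auto.
    + rewrite IHn; auto. intros i p x Hi Hp; apply Hd; lia.
    + apply Borel_finunion; intros; apply HF; lia.
    + intros x [i [Hi H1]] H2. apply (Hd i n x); auto; lia.
    + apply set_ext; intros x; split.
      * intros [[i [Hi H]]|H]; [exists i|exists n]; split; auto.
      * intros [i [Hi H]]. destruct (Nat.eq_dec i n). subst; auto. left; exists i; split; auto; lia.
Qed.

Lemma meas_partition m k X : finite_measure m -> Borel X ->
  m X = sumR (2 ^ k) (fun j => m (inter X (dyad k j))).
Proof.
  intros Hm HX.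
  rewrite <- meas_finadd; auto.
  - f_equal. apply set_ext. intros x; split.
    + intros H. destruct (dyad_exists x k (Borel_sub01 _ HX _ H)) as [j [Hv Hd]].
      exists j. split; auto. split; auto.
    + intros [i [_ [H _]]]; auto.
  - intros i Hi. apply Borel_inter; auto. apply Borel_dyad. auto.
  - intros i p x _ _ Hip [_ H1] [_ H2]. apply Hip. eapply dyad_uniq; eauto.
Qed.

Lemma cont_below m (S : nat -> R -> Prop) : finite_measure m ->
  (forall n, Borel (S n)) -> (forall n, incl (S n) (S (Datatypes.S n))) ->
  forall eps, 0 < eps -> exists N, m (fun x => exists n, S n x) <= m (S N) + eps.
Proof.
  intros Hm HB Hinc.
  assert (Hmon : forall n p, (n <= p)%nat -> incl (S n) (S p)).
  { intros n p Hnp. induction Hnp. intros x; auto. intros x Hx; apply Hinc; auto. }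
  set (P := fun n => match n with O => S O | Datatypes.S n' => fun x => S n x /\ ~ S n' x end).
  assert (HPB : forall n, Borel (P n)).
  { intros [|n]; simpl; auto. apply Borel_diff; auto. }
  assert (Hsum : forall n, sum_f_R0 (fun i => m (P i)) n = m (S n)).
  { induction n; simpl; auto. rewrite IHn. rewrite meas_diff; auto. lra. }
  assert (HU : (fun x => exists n, P n x) = (fun x => exists n, S n x)).
  { apply set_ext; intros x; split.
    - intros [[|n] H]; simpl in H; [exists O|exists (Datatypes.S n)]; tauto.
    - intros [n H]. induction n. exists O; auto.
      destruct (classic (S n x)). auto. exists (Datatypes.S n). simpl; tauto. }
  assert (Hd : forall n p x, n <> p -> P n x -> P p x -> False).
  { assert (forall n p x, (n < p)%nat -> P n x -> P p x -> False).
    { intros n [|p] x Hnp H1 H2. lia. simpl in H2. destruct H2 as [_ H2]. apply H2.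
      apply (Hmon n p). lia. destruct n; simpl in H1; tauto. }
    intros n p x Hnp H1 H2. destruct (Nat.lt_total n p) as [Hl|[He|Hl]]; eauto. }
  pose proof ((proj2 Hm) P HPB Hd) as Hinf. rewrite HU in Hinf.
  intros eps Heps. destruct (Hinf eps Heps) as [N HN]. exists N.
  specialize (HN N ltac:(lia)). rewrite Hsum in HN. unfold R_dist in HN.
  apply Rabs_def2 in HN. lra.
Qed.

Lemma cont_below_le m (S : nat -> R -> Prop) M : finite_measure m ->
  (forall n, Borel (S n)) -> (forall n, incl (S n) (S (Datatypes.S n))) ->
  (forall n, m (S n) <= M) -> m (fun x => exists n, S n x) <= M.
Proof.
  intros Hm HB Hinc HM.
  destruct (Rle_dec (m (fun x => exists n, S n x)) M) as [|ne]; auto.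
  destruct (cont_below m S Hm HB Hinc ((m (fun x => exists n, S n x) - M)/2)) as [N HN]. lra.
  specialize (HM N). lra.
Qed.

Definition Open (U : R -> Prop) : Prop :=
  forall x, U x -> exists k j, valid k j /\ dyad k j x /\ incl (dyad k j) U.

Definition compl (A : R -> Prop) : R -> Prop := fun x => 0 <= x < 1 /\ ~ A x.

Lemma Open_sub01 U : Open U -> forall x, U x -> 0 <= x < 1.
Proof. intros H x Hx. destruct (H x Hx) as [k [j [Hv [Hd _]]]]. eapply dyad_01; eauto. Qed.

Lemma Open_Borel U : Open U -> Borel U.
Proof.
  intros H. eapply Borel_ext. apply (Borel_levels (fun k j => incl (dyad k j) U)).
  intros x; split.
  - intros [k [j [Hi [_ Hd]]]]. auto.
  - intros Hx. destruct (H x Hx) as [k [j [Hv [Hd Hi]]]]. exists k, j; auto.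
Qed.

Lemma Open_inter U V : Open U -> Open V -> Open (fun x => U x /\ V x).
Proof.
  intros HU HV x [Hu Hv].
  destruct (HU x Hu) as [k1 [j1 [_ [Hd1 Hi1]]]].
  destruct (HV x Hv) as [k2 [j2 [_ [Hd2 Hi2]]]].
  destruct (dyad_exists x (Nat.max k1 k2) (Open_sub01 U HU x Hu)) as [j [Hv' Hd]].
  exists (Nat.max k1 k2), j. split; auto. split; auto.
  intros y Hy. split.
  - apply Hi1. eapply dyad_meet. 2: apply Hd. lia. apply Hd1. auto.
  - apply Hi2. eapply dyad_meet. 2: apply Hd. lia. apply Hd2. auto.
Qed.

Lemma Open_full : Open (fun x => 0 <= x < 1).
Proof.
  intros x Hx. exists O, O. split. unfold valid; simpl; lia. split.
  rewrite dyad_iff; simpl; lra. intros y Hy. eapply dyad_01; eauto. unfold valid; simpl; lia.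
Qed.

Lemma Open_dyad k j : valid k j -> Open (dyad k j).
Proof. intros Hv x Hx. exists k, j. split; auto. split; auto. intros y; auto. Qed.

Lemma Open_union (U : nat -> R -> Prop) : (forall n, Open (U n)) -> Open (fun x => exists n, U n x).
Proof.
  intros H x [n Hx]. destruct (H n x Hx) as [k [j [Hv [Hd Hi]]]].
  exists k, j. split; auto. split; auto. intros y Hy. exists n; auto.
Qed.

Lemma Open_compl_dyad k j : valid k j -> Open (compl (dyad k j)).
Proof.
  intros Hv x [Hx Hn]. destruct (dyad_exists x k Hx) as [j' [Hv' Hd']].
  exists k, j'. split; auto. split; auto. intros y Hy. split. eapply dyad_01; eauto.
  intros Hy'. apply Hn. rewrite (dyad_uniq _ _ _ _ Hy' Hy). auto.
Qed.

Lemma Open_finint N (V : nat -> R -> Prop) : (forall i, (i < N)%nat -> Open (V i)) ->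
  Open (fun x => 0 <= x < 1 /\ forall i, (i < N)%nat -> V i x).
Proof.
  induction N; intros H.
  - replace (fun x => 0 <= x < 1 /\ forall i, (i < 0)%nat -> V i x) with (fun x => 0 <= x < 1).
    apply Open_full. apply set_ext; intros x.
    split. intros; split; auto; intros; lia. tauto.
  - replace (fun x => 0 <= x < 1 /\ forall i, (i < S N)%nat -> V i x) with
      (fun x => (0 <= x < 1 /\ forall i, (i < N)%nat -> V i x) /\ V N x).
    apply Open_inter. apply IHN; auto. apply H; lia.
    apply set_ext; intros x; split.
    + intros [[H1 H2] H3]. split; auto. intros i Hi. destruct (Nat.eq_dec i N). subst; auto. apply H2; lia.
    + intros [H1 H2]. split. split; auto. apply H2; lia.
Qed.

Lemma Borel_compl' A : Borel A -> Borel (compl A).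
Proof. apply Borel_compl. Qed.

Lemma compl_compl A : Borel A -> compl (compl A) = A.
Proof.
  intros HA. apply set_ext; intros x. unfold compl. split.
  - intros [H1 H2]. apply NNPP. tauto.
  - intros H. pose proof (Borel_sub01 A HA x H). tauto.
Qed.

Lemma geo_sum eps N : sumR N (fun i => eps / 2 ^ (S i)) = eps - eps / 2 ^ N.
Proof.
  induction N. simpl. field.
  replace (sumR (S N) (fun i => eps / 2 ^ S i)) with (sumR N (fun i => eps / 2 ^ S i) + eps / 2 ^ S N) by reflexivity.
  rewrite IHN. simpl. field. apply pow_nonzero; lra.
Qed.

Definition Reg (m : (R -> Prop) -> R) (A : R -> Prop) : Prop :=
  forall eps, 0 < eps ->
  (exists U, Open U /\ incl A U /\ m U <= m A + eps) /\
  (exists V, Open V /\ incl (compl A) V /\ m V <= m (compl A) + eps).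

Lemma meas_cut m V A : finite_measure m -> Open V -> Borel A -> incl (compl A) V ->
  m (fun x => V x /\ A x) = m V - m (compl A).
Proof.
  intros Hm HV HA Hi.
  rewrite <- meas_diff; auto. f_equal. apply set_ext; intros x; split.
  - intros [H1 H2]. split; auto. unfold compl. tauto.
  - intros [H1 H2]. split; auto. unfold compl in H2. pose proof (Open_sub01 _ HV _ H1). apply NNPP; tauto.
  - apply Open_Borel; auto.
  - apply Borel_compl; auto.
Qed.

Lemma choice_nat (P : nat -> (R -> Prop) -> Prop) :
  (forall n, exists U, P n U) -> exists F : nat -> R -> Prop, forall n, P n (F n).
Proof.
  intros H. exists (fun n => proj1_sig (constructive_indefinite_description _ (H n))).
  intros n. exact (proj2_sig (constructive_indefinite_description _ (H n))).
Qed.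

Lemma Reg_all m A : finite_measure m -> Borel A -> Reg m A.
Proof.
  intros Hm HA. induction HA as [k j Hv | A HA IH | A HA IH].
  - intros eps Heps. split.
    + exists (dyad k j). split. apply Open_dyad; auto. split. intros x; auto. lra.
    + exists (compl (dyad k j)). split. apply Open_compl_dyad; auto. split. intros x; auto. lra.
  - intros eps Heps. destruct (IH eps Heps) as [H1 H2]. split.
    + exact H2.
    + fold (compl A). rewrite compl_compl; auto.
  - rename A into Af. set (Ainf := fun x => exists n, Af n x).
    assert (HBinf : Borel Ainf) by (apply Borel_union; auto).
    intros eps Heps. split.
    + destruct (choice_nat (fun n U => Open U /\ incl (Af n) U /\ m U <= m (Af n) + eps / 2 ^ (S n)))
        as [U HU].
      { intros n. refine (proj1 (IH n (eps / 2 ^ S n) _)). apply Rdiv_lt_0_compat; auto. apply pow2_pos. }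
      exists (fun x => exists n, U n x). split. apply Open_union. intros n; apply HU.
      split. intros x [n Hx]. exists n. apply HU; auto.
      assert (HUB : forall n, Borel (U n)) by (intros n; apply Open_Borel, HU).
      assert (HUinf : Borel (fun x => exists n, U n x)) by (apply Borel_union; auto).
      set (W := fun n x => U n x /\ ~ Af n x).
      assert (HWB : forall n, Borel (W n)) by (intros n; apply Borel_diff; auto).
      assert (HW : forall n, m (W n) <= eps / 2 ^ S n).
      { intros n. unfold W. rewrite meas_diff; auto. destruct (HU n) as [_ [_ H]]. lra. apply HU. }
      assert (HWinf : m (fun x => exists n, W n x) <= eps).
      { replace (fun x => exists n, W n x) with
          (fun x => exists N, (fun N x => exists i, (i < N)%nat /\ W i x) N x).
        apply cont_below_le; auto.
        - intros N. apply Borel_finunion; auto.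
        - intros N x [i [Hi Hx]]. exists i; split; auto.
        - intros N. eapply Rle_trans. apply meas_finsub; auto.
          eapply Rle_trans. 2: (apply Rle_trans with (eps - eps / 2 ^ N); [ right; apply geo_sum |]).
          { clear -HW. induction N; cbn [sumR]; [lra|]. specialize (HW N). lra. }
          pose proof (pow2_pos N). assert (0 < eps / 2 ^ N) by (apply Rdiv_lt_0_compat; auto). lra.
        - apply set_ext; intros x; split. intros [N [i [_ H]]]; exists i; auto.
          intros [i H]. exists (S i), i. split; auto. }
      assert (Hsub : m (fun x => (exists n, U n x) /\ ~ Ainf x) <= m (fun x => exists n, W n x)).
      { apply meas_mono; auto. apply Borel_diff; auto. apply Borel_union; auto.
        intros x [[n Hn] Hx]. exists n. split; auto. intros H; apply Hx. exists n; auto. }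
      rewrite meas_diff in Hsub; auto. fold Ainf. lra.
      intros x [n Hx]. exists n. apply HU; auto.
    + destruct (cont_below m (fun N x => exists i, (i < N)%nat /\ Af i x) Hm) with (eps := eps / 2)
        as [N HN].
      { intros N. apply Borel_finunion; auto. }
      { intros N x [i [Hi Hx]]. exists i; split; auto. }
      lra.
      replace (fun x => exists n, exists i, (i < n)%nat /\ Af i x) with Ainf in HN.
      2: { apply set_ext; intros x; split. intros [i H]. exists (S i), i; auto.
           intros [n [i [_ H]]]. exists i; auto. }
      set (delta := eps / 2 / INR (S N)).
      assert (Hdelta : 0 < delta).
      { unfold delta. apply Rdiv_lt_0_compat. lra. apply lt_0_INR. lia. }
      destruct (choice_nat (fun n V => Open V /\ incl (compl (Af n)) V /\ m V <= m (compl (Af n)) + delta))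
        as [V HV].
      { intros n. exact (proj2 (IH n delta Hdelta)). }
      set (VV := fun x => 0 <= x < 1 /\ forall i, (i < N)%nat -> V i x).
      assert (HVV : Open VV) by (apply Open_finint; intros; apply HV).
      exists VV. split; auto. split.
      { intros x [Hx Hn]. split; auto. intros i Hi. apply HV. split; auto. intros H; apply Hn. exists i; auto. }
      assert (HVB : forall n, Borel (V n)) by (intros n; apply Open_Borel, HV).
      assert (HVVB : Borel VV) by (apply Open_Borel; auto).
      assert (E1 : m (fun x => VV x /\ Ainf x) = m VV - m (compl Ainf)).
      { apply meas_cut; auto. intros x [Hx Hn]. split; auto. intros i Hi. apply HV. split; auto.
        intros H; apply Hn. exists i; auto. }
      set (FN := fun x => exists i, (i < N)%nat /\ Af i x).
      assert (HFN : Borel FN) by (apply Borel_finunion; auto).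
      assert (E2 : m (fun x => VV x /\ Ainf x) <=
                   m (fun x => exists i, (i < N)%nat /\ (V i x /\ Af i x)) + m (fun x => Ainf x /\ ~ FN x)).
      { eapply Rle_trans. 2: apply meas_sub2; auto.
        apply meas_mono; auto. apply Borel_inter; auto.
        apply Borel_union2. apply Borel_finunion; intros; apply Borel_inter; auto. apply Borel_diff; auto.
        intros x [[Hx Hv] Ha]. destruct (classic (FN x)) as [[i [Hi Hai]]|Hf]; [left|right].
        exists i; auto. split; auto.
        apply Borel_finunion; intros; apply Borel_inter; auto. apply Borel_diff; auto. }
      assert (E3 : m (fun x => exists i, (i < N)%nat /\ (V i x /\ Af i x)) <= INR N * delta).
      { eapply Rle_trans. apply meas_finsub; auto. intros; apply Borel_inter; auto.
        clearbody delta. clear -HV Hm HA. induction N. simpl; lra. cbn [sumR]. rewrite S_INR.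
        rewrite meas_cut; auto. destruct (HV N) as [_ [_ H]]. lra. apply HV. apply HV. }
      assert (E4 : m (fun x => Ainf x /\ ~ FN x) = m Ainf - m FN).
      { apply meas_diff; auto. intros x [i [_ H]]. exists i; auto. }
      assert (E5 : INR N * delta <= eps / 2).
      { unfold delta. rewrite S_INR. pose proof (pos_INR N).
        apply Rmult_le_reg_r with (INR N + 1). lra.
        replace (INR N * (eps / 2 / (INR N + 1)) * (INR N + 1)) with (INR N * (eps/2)) by (field; lra).
        nra. }
      fold FN in HN. lra.
Qed.

Lemma regularity m A eps : finite_measure m -> Borel A -> 0 < eps ->
  exists U, Open U /\ incl A U /\ m U <= m A + eps.
Proof. intros Hm HA Heps. exact (proj1 (Reg_all m A Hm HA eps Heps)). Qed.

Lemma level_incl k j k' j' : incl (dyad k j) (dyad k' j') -> (k' <= k)%nat.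
Proof.
  intros Hi. destruct (Nat.le_gt_cases k' k) as [|Hlt]; auto. exfalso.
  pose proof (dyad_point k j) as Hx. set (x := INR j / 2 ^ k) in *.
  assert (Hx' := Hi x Hx).
  assert (H1 : dyad (S k) (j' / 2 ^ (k' - S k)) x).
  { apply dyad_nest. replace (S k + (k' - S k))%nat with k' by lia. auto. }
  set (c1 := (j' / 2 ^ (k' - S k))%nat) in *.
  assert (Hi1 : incl (dyad k' j') (dyad (S k) c1)) by (eapply dyad_meet; eauto; lia).
  assert (Hc : c1 = (2 * j)%nat%nat \/ c1 = (2 * j + 1)%nat%nat).
  { destruct (dyad_child _ _ _ Hx) as [H|H]; [left|right]; eapply dyad_uniq; eauto. }
  set (c2 := if Nat.eq_dec c1 (2 * j)%nat then (2 * j + 1)%nat%nat else (2 * j)%nat%nat).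
  assert (Hc2 : c2 <> c1 /\ (c2 = (2*j)%nat \/ c2 = (2*j+1)%nat)).
  { unfold c2. destruct (Nat.eq_dec c1 (2*j)); lia. }
  pose proof (dyad_point (S k) c2) as Hy. set (y := INR c2 / 2 ^ S k) in *.
  assert (dyad k j y) by (apply dyad_child_parent; destruct Hc2 as [_ [E|E]]; rewrite <- E; auto).
  apply Hi, Hi1 in H. apply (proj1 Hc2). eapply dyad_uniq; eauto.
Qed.

Lemma tree_valid T kt jt k j : is_tree T kt jt -> T k j -> valid k j.
Proof. intros [H _] HT; auto. Qed.

Lemma tree_top_incl T kt jt k j : is_tree T kt jt -> T k j -> incl (dyad k j) (dyad kt jt).
Proof. intros [_ [_ [_ [H _]]]] HT; auto. Qed.

Lemma tree_level T kt jt k j : is_tree T kt jt -> T k j -> (kt <= k)%nat.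
Proof. intros Ht HT. eapply level_incl. eapply tree_top_incl; eauto. Qed.

Lemma tree_top_idx T kt jt j : is_tree T kt jt -> T kt j -> j = jt.
Proof.
  intros Ht HT. pose proof (dyad_point kt j). eapply dyad_uniq; eauto.
  eapply tree_top_incl; eauto.
Qed.

Lemma tree_parent T kt jt d j : is_tree T kt jt -> T (kt + S d)%nat j -> T (kt + d)%nat (j / 2)%nat.
Proof.
  intros Ht HT. pose proof Ht as [Hv [Hc [Htop [Hin _]]]].
  apply (Hc (kt + S d)%nat j kt jt); auto.
  - unfold valid in *. specialize (Hv _ _ HT). rewrite Nat.add_succ_r, Nat.pow_succ_r' in Hv.
    apply Nat.Div0.div_lt_upper_bound. lia.
  - intros y Hy. apply dyad_parent. rewrite <- Nat.add_succ_r. auto.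
  - pose proof (dyad_point (kt + S d) j) as Hx.
    eapply dyad_meet. 2: { apply dyad_parent. rewrite <- Nat.add_succ_r. apply Hx. } lia.
    apply (Hin _ _ HT _ Hx).
Qed.

Lemma tree_pos T kt jt (s : (R -> Prop) -> R) D : is_tree T kt jt -> 0 < s (dyad kt jt) ->
  1 <= D -> doubling s T kt jt D -> forall k j, T k j -> 0 < s (dyad k j).
Proof.
  intros Ht Htop HD Hdb k j HT.
  pose proof (tree_level _ _ _ _ _ Ht HT) as Hk.
  replace k with (kt + (k - kt))%nat in * by lia. clear Hk.
  revert j HT. generalize (k - kt)%nat as d. intros d. induction d; intros j HT.
  - rewrite Nat.add_0_r in *. rewrite (tree_top_idx _ _ _ _ Ht HT). auto.
  - specialize (IHd _ (tree_parent _ _ _ _ _ Ht HT)).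
    specialize (Hdb _ _ HT). replace (kt + S d - 1)%nat with (kt + d)%nat in Hdb by lia.
    assert (s (dyad (kt + d) (j / 2)) <= D * s (dyad (kt + S d) j)).
    { apply Hdb. intros E. injection E. lia. }
    destruct (Rle_dec (s (dyad (kt + S d) j)) 0); [|lra].
    assert (D * s (dyad (kt + S d) j) <= 0) by nra. lra.
Qed.

Lemma tree_children T kt jt k j : is_tree T kt jt -> T k j -> ~ leaf T k j ->
  T (S k) (2 * j)%nat /\ T (S k) (2 * j + 1)%nat.
Proof.
  intros Ht HT Hl. pose proof Ht as [_ [_ [_ [_ H]]]]. specialize (H k j HT).
  unfold leaf in Hl. destruct (classic (T (S k) (2 * j)%nat)); tauto.
Qed.

Lemma child_not_top T kt jt k j c : is_tree T kt jt -> T k j -> (S k, c) <> (kt, jt).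
Proof. intros Ht HT E. injection E. intros. pose proof (tree_level _ _ _ _ _ Ht HT). lia. Qed.

Lemma doubling_child T kt jt s D k j : is_tree T kt jt -> doubling s T kt jt D -> T k j -> ~ leaf T k j ->
  s (dyad k j) <= D * s (dyad (S k) (2 * j)%nat) /\ s (dyad k j) <= D * s (dyad (S k) (2 * j + 1)%nat).
Proof.
  intros Ht Hdb HT Hl. destruct (tree_children _ _ _ _ _ Ht HT Hl) as [H1 H2].
  split.
  - pose proof (Hdb _ _ H1 (child_not_top _ _ _ _ _ _ Ht HT)) as H.
    replace (S k - 1)%nat with k in H by lia.
    replace (2 * j / 2)%nat with j in H; auto. rewrite Nat.mul_comm, Nat.div_mul; lia.
  - pose proof (Hdb _ _ H2 (child_not_top _ _ _ _ _ _ Ht HT)) as H.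
    replace (S k - 1)%nat with k in H by lia.
    replace ((2 * j + 1)%nat / 2)%nat with j in H; auto. rewrite Nat.mul_comm, Nat.div_add_l by lia. simpl; lia.
Qed.

Lemma valid_children k j : valid k j -> valid (S k) (2 * j)%nat /\ valid (S k) (2 * j + 1)%nat.
Proof. unfold valid. rewrite Nat.pow_succ_r'. lia. Qed.

Lemma meas_children m k j : finite_measure m -> valid k j ->
  m (dyad k j) = m (dyad (S k) (2 * j)%nat) + m (dyad (S k) (2 * j + 1)%nat).
Proof.
  intros Hm Hv. destruct (valid_children _ _ Hv).
  rewrite <- meas_add2; auto using Borel_dyad.
  - f_equal. apply set_ext. intros x. split. apply dyad_child. apply dyad_child_parent.
  - intros x H1 H2. pose proof (dyad_uniq _ _ _ _ H1 H2). lia.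
Qed.

Lemma boundary_chain T kt jt x : is_tree T kt jt -> boundary T kt jt x ->
  forall n, (kt <= n)%nat -> exists j, T n j /\ dyad n j x.
Proof.
  intros Ht [Hx Hl] n Hn. pose proof Ht as [_ [_ [Htop _]]].
  replace n with (kt + (n - kt))%nat by lia. generalize (n - kt)%nat as d. clear Hn n.
  induction d.
  - exists jt. rewrite Nat.add_0_r. auto.
  - destruct IHd as [j [HT Hd]].
    assert (~ leaf T (kt + d) j) by (intros Hlf; apply Hl; exists (kt + d)%nat, j; auto).
    destruct (tree_children _ _ _ _ _ Ht HT H).
    rewrite Nat.add_succ_r. destruct (dyad_child _ _ _ Hd) as [E|E]; eexists; split; [| apply E | | apply E]; auto.
Qed.

Lemma Borel_leaves T kt jt : is_tree T kt jt -> Borel (leaves_union T).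
Proof.
  intros Ht. eapply Borel_ext. apply (Borel_levels (leaf T)).
  intros x; split.
  - intros [k [j [H [_ Hd]]]]. exists k, j; auto.
  - intros [k [j [H Hd]]]. exists k, j. split; auto. split; auto. eapply tree_valid; eauto. apply H.
Qed.

Lemma Borel_top T kt jt : is_tree T kt jt -> Borel (dyad kt jt).
Proof. intros Ht. apply Borel_dyad. eapply tree_valid; eauto. apply Ht. Qed.

Lemma Borel_boundary T kt jt : is_tree T kt jt -> Borel (boundary T kt jt).
Proof. intros Ht. apply Borel_diff. eapply Borel_top; eauto. eapply Borel_leaves; eauto. Qed.

Lemma chi_ineq m1 m2 n1 n2 D : 0 <= m1 -> 0 <= m2 -> 0 < m1 + m2 -> 0 < n1 -> 0 < n2 ->
  n1 + n2 <= D * n1 -> n1 + n2 <= D * n2 ->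
  m1 * (m1 / n1) + m2 * (m2 / n2) <=
  (m1 + m2) * ((m1 + m2) / (n1 + n2)) +
  D ^ 2 * ((m1 / (m1 + m2) - n1 / (n1 + n2)) ^ 2 * (m1 + m2)) * ((m1 + m2) / (n1 + n2)).
Proof.
  intros Hm1 Hm2 Hm Hn1 Hn2 H1 H2.
  set (X := m1 * n2 - m2 * n1).
  assert (E1 : m1 * (m1 / n1) + m2 * (m2 / n2) = (m1 + m2) * ((m1 + m2) / (n1 + n2)) + X ^ 2 / (n1 * n2 * (n1 + n2))).
  { unfold X. field. lra. }
  assert (E2 : D ^ 2 * ((m1 / (m1 + m2) - n1 / (n1 + n2)) ^ 2 * (m1 + m2)) * ((m1 + m2) / (n1 + n2))
              = D ^ 2 * X ^ 2 / (n1 + n2) ^ 3).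
  { unfold X. field. lra. }
  rewrite E1, E2.
  assert (E3 : X ^ 2 / (n1 * n2 * (n1 + n2)) - D ^ 2 * X ^ 2 / (n1 + n2) ^ 3 =
               (X ^ 2 * ((n1 + n2) ^ 2 - D ^ 2 * (n1 * n2))) * / (n1 * n2 * (n1 + n2) ^ 3)).
  { field. lra. }
  assert (Hq : (n1 + n2) * (n1 + n2) <= (D * n1) * (D * n2)).
  { apply Rmult_le_compat; lra. }
  assert (Ha : X ^ 2 * ((n1 + n2) ^ 2 - D ^ 2 * (n1 * n2)) <= 0).
  { assert (0 <= X ^ 2) by (apply pow2_ge_0).
    assert ((n1 + n2) ^ 2 - D ^ 2 * (n1 * n2) <= 0) by (simpl; nra).
    assert (X ^ 2 * ((n1 + n2) ^ 2 - D ^ 2 * (n1 * n2)) <= X ^ 2 * 0) by (apply Rmult_le_compat_l; auto).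
    lra. }
  assert (Hb : 0 < / (n1 * n2 * (n1 + n2) ^ 3)).
  { apply Rinv_0_lt_compat. apply Rmult_lt_0_compat. apply Rmult_lt_0_compat; lra. apply pow_lt; lra. }
  assert ((X ^ 2 * ((n1 + n2) ^ 2 - D ^ 2 * (n1 * n2))) * / (n1 * n2 * (n1 + n2) ^ 3) <= 0 * / (n1 * n2 * (n1 + n2) ^ 3))
    by (apply Rmult_le_compat_r; lra).
  lra.
Qed.

Definition ratio (mu nu : (R -> Prop) -> R) k j := mu (dyad k j) / nu (dyad k j).

Fixpoint sm (mu nu : (R -> Prop) -> R) (T : nat -> nat -> Prop) (t : R) (e k j : nat) {struct e} : R :=
  if Rlt_dec t (ratio mu nu k j) then mu (dyad k j) else
  match e with
  | O => 0
  | S e' => if excluded_middle_informative (leaf T k j) then 0 else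
            sm mu nu T t e' (S k) (2 * j)%nat + sm mu nu T t e' (S k) (2 * j + 1)%nat
  end.

Fixpoint en (mu nu : (R -> Prop) -> R) (T : nat -> nat -> Prop) (t : R) (e k j : nat) {struct e} : R :=
  if Rlt_dec t (ratio mu nu k j) then 0 else
  match e with
  | O => 0
  | S e' => if excluded_middle_informative (leaf T k j) then 0 else
            Defs.Delta mu nu k j ^ 2 * mu (dyad k j) +
            en mu nu T t e' (S k) (2 * j)%nat + en mu nu T t e' (S k) (2 * j + 1)%nat
  end.

Lemma en_nonneg T kt jt mu nu t : is_tree T kt jt -> finite_measure mu ->
  forall e k j, T k j -> 0 <= en mu nu T t e k j.
Proof.
  intros Ht Hmu e. induction e; intros k j HT; cbn [en sm].
  - destruct (Rlt_dec t (ratio mu nu k j)); lra.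
  - destruct (Rlt_dec t (ratio mu nu k j)); [lra|].
    destruct (excluded_middle_informative (leaf T k j)) as [|Hl]; [lra|].
    destruct (tree_children _ _ _ _ _ Ht HT Hl) as [H1 H2].
    pose proof (IHe _ _ H1). pose proof (IHe _ _ H2).
    pose proof (meas_nonneg mu Hmu _ (Borel_dyad _ _ (tree_valid _ _ _ _ _ Ht HT))).
    pose proof (pow2_ge_0 (Defs.Delta mu nu k j)).
    assert (0 <= Defs.Delta mu nu k j ^ 2 * mu (dyad k j)) by (apply Rmult_le_pos; auto). lra.
Qed.

Lemma core T kt jt mu nu D t : is_tree T kt jt -> finite_measure mu -> finite_measure nu ->
  0 < mu (dyad kt jt) /\ 0 < nu (dyad kt jt) -> 1 <= D ->
  doubling mu T kt jt D -> doubling nu T kt jt D -> 0 < t ->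
  forall e k j, T k j ->
  t * sm mu nu T t e k j <= mu (dyad k j) * ratio mu nu k j + D ^ 2 * t * en mu nu T t e k j.
Proof.
  intros Ht Hmu Hnu [HAm HAn] HD Hbm Hbn Ht0.
  assert (Pm : forall k j, T k j -> 0 < mu (dyad k j)) by (apply (tree_pos T kt jt mu D); auto).
  assert (Pn : forall k j, T k j -> 0 < nu (dyad k j)) by (apply (tree_pos T kt jt nu D); auto).
  intros e. induction e; intros k j HT; cbn [en sm].
  - specialize (Pm k j HT). specialize (Pn k j HT).
    destruct (Rlt_dec t (ratio mu nu k j)).
    + assert (t * mu (dyad k j) <= ratio mu nu k j * mu (dyad k j)) by (apply Rmult_le_compat_r; lra).
      lra.
    + assert (0 <= ratio mu nu k j) by (unfold ratio; apply Rlt_le, Rdiv_lt_0_compat; auto).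
      assert (0 <= mu (dyad k j) * ratio mu nu k j) by (apply Rmult_le_pos; lra). lra.
  - pose proof (Pm k j HT) as Pmk. pose proof (Pn k j HT) as Pnk.
    assert (Hr0 : 0 <= ratio mu nu k j) by (unfold ratio; apply Rlt_le, Rdiv_lt_0_compat; auto).
    assert (0 <= mu (dyad k j) * ratio mu nu k j) by (apply Rmult_le_pos; lra).
    destruct (Rlt_dec t (ratio mu nu k j)).
    + assert (t * mu (dyad k j) <= ratio mu nu k j * mu (dyad k j)) by (apply Rmult_le_compat_r; lra).
      lra.
    + destruct (excluded_middle_informative (leaf T k j)) as [|Hl].
      { pose proof (pow2_ge_0 D). assert (0 <= D ^ 2 * t) by (apply Rmult_le_pos; lra). lra. }
      destruct (tree_children _ _ _ _ _ Ht HT Hl) as [H1 H2].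
      pose proof (IHe _ _ H1) as I1. pose proof (IHe _ _ H2) as I2.
      pose proof (tree_valid _ _ _ _ _ Ht HT) as Hv.
      pose proof (meas_children mu k j Hmu Hv) as Em.
      pose proof (meas_children nu k j Hnu Hv) as En.
      destruct (doubling_child _ _ _ _ _ _ _ Ht Hbn HT Hl) as [Dn1 Dn2].
      unfold ratio in *. unfold Defs.Delta. rewrite pow2_abs.
      set (m1 := mu (dyad (S k) (2 * j)%nat)) in *. set (m2 := mu (dyad (S k) (2 * j + 1)%nat)) in *.
      set (n1 := nu (dyad (S k) (2 * j)%nat)) in *. set (n2 := nu (dyad (S k) (2 * j + 1)%nat)) in *.
      rewrite Em, En. rewrite Em, En in n.
      rewrite Em in Pmk. rewrite En in Pnk, Dn1, Dn2.
      pose proof (chi_ineq m1 m2 n1 n2 D (Rlt_le _ _ (Pm _ _ H1)) (Rlt_le _ _ (Pm _ _ H2)) Pmk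
                    (Pn _ _ H1) (Pn _ _ H2) Dn1 Dn2) as C.
      set (dd := (m1 / (m1 + m2) - n1 / (n1 + n2)) ^ 2 * (m1 + m2)) in *.
      set (r := (m1 + m2) / (n1 + n2)) in *.
      assert (0 <= dd) by (unfold dd; apply Rmult_le_pos; [apply pow2_ge_0 | lra]).
      assert (D ^ 2 * dd * r <= D ^ 2 * t * dd).
      { replace (D ^ 2 * t * dd) with (D ^ 2 * dd * t) by ring. apply Rmult_le_compat_l.
        apply Rmult_le_pos; auto. apply pow2_ge_0. lra. }
      rewrite Rmult_plus_distr_l. rewrite !Rmult_plus_distr_l. lra.
Qed.

Lemma meas_zero_empty m A : finite_measure m -> (forall x, A x -> False) -> m A = 0.
Proof.
  intros Hm H. replace A with (fun _ : R => False). apply meas_empty; auto.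
  apply set_ext; intros x; split; [tauto|]. apply H.
Qed.

Lemma indic_true (P : Prop) v : P -> indic P v = v.
Proof. intros H. unfold indic. destruct (excluded_middle_informative P); tauto. Qed.

Lemma indic_false (P : Prop) v : ~ P -> indic P v = 0.
Proof. intros H. unfold indic. destruct (excluded_middle_informative P); tauto. Qed.

Lemma indic_nonneg (P : Prop) v : (P -> 0 <= v) -> 0 <= indic P v.
Proof. intros H. unfold indic. destruct (excluded_middle_informative P); auto; lra. Qed.

Lemma sumR_le n f g : (forall i, (i < n)%nat -> f i <= g i) -> sumR n f <= sumR n g.
Proof.
  induction n; intros H; simpl. lra.
  pose proof (IHn ltac:(intros; apply H; lia)). pose proof (H n ltac:(lia)). lra.
Qed.

Lemma sumR_plus n f g : sumR n (fun i => f i + g i) = sumR n f + sumR n g.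
Proof. induction n; simpl. lra. rewrite IHn. lra. Qed.

Lemma sumR_scal n c f : sumR n (fun i => c * f i) = c * sumR n f.
Proof. induction n; simpl. lra. rewrite IHn. lra. Qed.

Lemma sumR_ext n f g : (forall i, (i < n)%nat -> f i = g i) -> sumR n f = sumR n g.
Proof. induction n; intros H; simpl. auto. rewrite IHn, H; auto. Qed.

Lemma sumR_nonneg n f : (forall i, (i < n)%nat -> 0 <= f i) -> 0 <= sumR n f.
Proof. induction n; intros H; simpl. lra. pose proof (IHn ltac:(intros; apply H; lia)). pose proof (H n ltac:(lia)). lra. Qed.

Lemma sumR_term n f i : (forall i, (i < n)%nat -> 0 <= f i) -> (i < n)%nat -> f i <= sumR n f.
Proof.
  induction n; intros H Hi. lia. simpl.
  destruct (Nat.eq_dec i n). subst. pose proof (sumR_nonneg n f ltac:(intros; apply H; lia)). lra.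
  pose proof (IHn ltac:(intros; apply H; lia) ltac:(lia)). pose proof (H n ltac:(lia)). lra.
Qed.

Lemma sumR_double n f : sumR (2 * n) f = sumR n (fun j => f (2 * j)%nat + f (2 * j + 1)%nat).
Proof.
  induction n. simpl; auto.
  replace (2 * S n)%nat with (S (S (2 * n))) by lia. cbn [sumR]. rewrite IHn.
  replace (S (2 * n)) with (2 * n + 1)%nat by lia. lra.
Qed.

Lemma sumR_shift e g : sumR (S e) g = g O + sumR e (fun m => g (S m)).
Proof. induction e. simpl; lra. cbn [sumR] in *. rewrite IHe. lra. Qed.

Lemma sum_f_R0_sumR a n : sum_f_R0 a n = sumR (S n) a.
Proof. induction n; simpl. lra. rewrite IHn. simpl. lra. Qed.

Definition Stop T kt jt mu nu t e k j : R -> Prop :=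
  fun x => boundary T kt jt x /\ dyad k j x /\
    exists n i, (k <= n <= k + e)%nat /\ T n i /\ dyad n i x /\ t < ratio mu nu n i.

Lemma Borel_Stop T kt jt mu nu t e k j : is_tree T kt jt -> valid k j ->
  Borel (Stop T kt jt mu nu t e k j).
Proof.
  intros Ht Hv.
  set (P := fun n i => (k <= n <= k + e)%nat /\ T n i /\ t < ratio mu nu n i).
  apply Borel_ext with (A := fun x => boundary T kt jt x /\ (dyad k j x /\ exists n i, P n i /\ valid n i /\ dyad n i x)).
  apply Borel_inter. apply (Borel_boundary _ _ _ Ht).
  apply Borel_inter. apply (Borel_dyad _ _ Hv).
  apply (Borel_levels P).
  intros x; split.
  - intros [H1 [H2 [n [i [[Hn [HT Hr]] [_ Hd]]]]]]. split; auto. split; auto. exists n, i. auto.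
  - intros [H1 [H2 [n [i [Hn [HT [Hd Hr]]]]]]]. split; auto. split; auto. exists n, i.
    split. unfold P; auto. split. eapply tree_valid; eauto. auto.
Qed.

Lemma stop_bound T kt jt mu nu t : is_tree T kt jt -> finite_measure mu ->
  forall e k j, T k j -> mu (Stop T kt jt mu nu t e k j) <= sm mu nu T t e k j.
Proof.
  intros Ht Hmu e. induction e; intros k j HT; cbn [sm].
  - pose proof (tree_valid _ _ _ _ _ Ht HT) as Hv.
    destruct (Rlt_dec t (ratio mu nu k j)).
    + apply meas_mono; auto. apply Borel_Stop; auto. apply Borel_dyad; auto.
      intros x [_ [H _]]; auto.
    + right. apply meas_zero_empty; auto.
      intros x [_ [Hd [n' [i [Hn [_ [Hd' Hr]]]]]]].
      replace n' with k in * by lia. rewrite <- (dyad_uniq _ _ _ _ Hd Hd') in Hr. tauto.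
  - pose proof (tree_valid _ _ _ _ _ Ht HT) as Hv.
    destruct (Rlt_dec t (ratio mu nu k j)).
    + apply meas_mono; auto. apply Borel_Stop; auto. apply Borel_dyad; auto.
      intros x [_ [H _]]; auto.
    + destruct (excluded_middle_informative (leaf T k j)) as [Hl|Hl].
      { right. apply meas_zero_empty; auto. intros x [[_ Hb] [Hd _]]. apply Hb. exists k, j; auto. }
      destruct (tree_children _ _ _ _ _ Ht HT Hl) as [H1 H2].
      destruct (valid_children _ _ Hv) as [V1 V2].
      eapply Rle_trans. apply meas_mono with
        (B := fun x => Stop T kt jt mu nu t e (S k) (2 * j)%nat x \/ Stop T kt jt mu nu t e (S k) (2 * j + 1)%nat x); auto.
      apply Borel_Stop; auto. apply Borel_union2; apply Borel_Stop; auto.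
      { intros x [Hb [Hd [n' [i [Hn [HTn [Hd' Hr]]]]]]].
        assert (n' <> k). { intros E. subst. rewrite <- (dyad_uniq _ _ _ _ Hd Hd') in Hr. tauto. }
        destruct (dyad_child _ _ _ Hd) as [Hc|Hc]; [left|right]; unfold Stop;
          (split; [exact Hb|]); (split; [exact Hc|]); exists n', i; (split; [lia|]); auto. }
      eapply Rle_trans. apply meas_sub2; auto; apply Borel_Stop; auto.
      pose proof (IHe _ _ H1). pose proof (IHe _ _ H2). lra.
Qed.

Lemma en_sum T kt jt mu nu t : is_tree T kt jt -> finite_measure mu ->
  forall e k, sumR (2 ^ k) (fun j => indic (T k j) (en mu nu T t e k j)) <=
              sumR e (fun m => energy_level mu nu T (k + m)).
Proof.
  intros Ht Hmu e. induction e; intros k.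
  - change (sumR 0 (fun m => energy_level mu nu T (k + m))) with 0.
    apply Rle_trans with (sumR (2^k) (fun _ => 0)).
    + apply sumR_le. intros i _. unfold indic. destruct (excluded_middle_informative (T k i)); cbn [en];
      [destruct (Rlt_dec t (ratio mu nu k i))|]; lra.
    + right. clear. induction (2^k)%nat; simpl; lra.
  - rewrite sumR_shift. rewrite Nat.add_0_r.
    replace (sumR e (fun m => energy_level mu nu T (k + S m)))
      with (sumR e (fun m => energy_level mu nu T (S k + m)))
      by (apply sumR_ext; intros; f_equal; lia).
    eapply Rle_trans. 2: { apply Rplus_le_compat_l. apply IHe. }
    rewrite Nat.pow_succ_r', sumR_double. unfold energy_level. rewrite <- sumR_plus.
    apply sumR_le. intros i Hi.
    assert (Hpos : forall c, 0 <= indic (T (S k) c) (en mu nu T t e (S k) c)).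
    { intros c. apply indic_nonneg. intros; eapply en_nonneg; eauto. }
    assert (Hd0 : 0 <= indic (T k i /\ ~ leaf T k i) (Defs.Delta mu nu k i ^ 2 * mu (dyad k i))).
    { apply indic_nonneg. intros [HT _]. apply Rmult_le_pos. apply pow2_ge_0.
      apply meas_nonneg; auto. apply Borel_dyad. eapply tree_valid; eauto. }
    pose proof (Hpos (2 * i)%nat). pose proof (Hpos (2 * i + 1)%nat).
    destruct (classic (T k i)) as [HT|HT].
    2: { rewrite indic_false; auto. lra. }
    rewrite indic_true; auto. cbn [en].
    destruct (Rlt_dec t (ratio mu nu k i)). lra.
    destruct (excluded_middle_informative (leaf T k i)) as [|Hl]. lra.
    destruct (tree_children _ _ _ _ _ Ht HT Hl) as [H1 H2].
    rewrite (indic_true (T k i /\ _)); auto. rewrite !indic_true; auto. lra.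
Qed.

Lemma sumR_add a e f : sumR (a + e) f = sumR a f + sumR e (fun m => f (a + m)%nat).
Proof. induction e. rewrite Nat.add_0_r. simpl. lra. rewrite Nat.add_succ_r. cbn [sumR]. rewrite IHe. lra. Qed.

Lemma sumR_mono_n a b f : (forall n, 0 <= f n) -> (a <= b)%nat -> sumR a f <= sumR b f.
Proof.
  intros H Hab. replace b with (a + (b - a))%nat by lia. rewrite sumR_add.
  pose proof (sumR_nonneg (b - a) (fun m => f (a + m)%nat) ltac:(intros; apply H)). lra.
Qed.

Lemma tail_small f : (forall n, 0 <= f n) -> (exists M, forall n, sumR n f <= M) ->
  forall eta, 0 < eta -> exists N, forall N', (N <= N')%nat -> forall e, sumR e (fun m => f (N' + m)%nat) <= eta.
Proof.
  intros Hf [M HM] eta Heta.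
  set (E := fun y => exists n, y = sumR n f).
  destruct (completeness E) as [L [HL1 HL2]].
  { exists M. intros y [n ->]. auto. }
  { exists (sumR 0 f). exists O. auto. }
  assert (exists N, L - eta < sumR N f).
  { apply NNPP. intros C. assert (L <= L - eta). apply HL2. intros y [n ->].
    destruct (Rlt_le_dec (L - eta) (sumR n f)); auto. exfalso; apply C; eauto. lra. }
  destruct H as [N HN]. exists N. intros N' HN' e.
  assert (sumR (N' + e) f <= L) by (apply HL1; eexists; eauto).
  rewrite sumR_add in H. pose proof (sumR_mono_n N N' f Hf HN'). lra.
Qed.

Definition Hc T kt jt mu nu c : R -> Prop :=
  fun x => boundary T kt jt x /\ exists n i, T n i /\ dyad n i x /\ c < ratio mu nu n i.

Lemma Borel_Hc T kt jt mu nu c : is_tree T kt jt -> Borel (Hc T kt jt mu nu c).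
Proof.
  intros Ht.
  apply Borel_ext with (A := fun x => boundary T kt jt x /\
     exists n i, (T n i /\ c < ratio mu nu n i) /\ valid n i /\ dyad n i x).
  apply Borel_inter. apply (Borel_boundary _ _ _ Ht). apply Borel_levels.
  intros x; split.
  - intros [H1 [n [i [[H2 H3] [_ H4]]]]]. split; auto. exists n, i; auto.
  - intros [H1 [n [i [H2 [H3 H4]]]]]. split; auto. exists n, i. split; auto. split; auto. eapply tree_valid; eauto.
Qed.

Lemma Hc_small T kt jt mu nu D : is_tree T kt jt -> finite_measure mu -> finite_measure nu ->
  0 < mu (dyad kt jt) /\ 0 < nu (dyad kt jt) -> 1 <= D ->
  doubling mu T kt jt D -> doubling nu T kt jt D ->
  (exists M, forall n, sumR n (energy_level mu nu T) <= M) ->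
  forall eps, 0 < eps -> exists c, 0 <= c /\ mu (Hc T kt jt mu nu c) <= eps.
Proof.
  intros Ht Hmu Hnu HA HD Hbm Hbn Hsum eps Heps.
  assert (Pm : forall k j, T k j -> 0 < mu (dyad k j)) by (apply (tree_pos T kt jt mu D); tauto).
  assert (Pn : forall k j, T k j -> 0 < nu (dyad k j)) by (apply (tree_pos T kt jt nu D); tauto).
  assert (Pr : forall k j, T k j -> 0 <= ratio mu nu k j).
  { intros k j HT. unfold ratio. apply Rlt_le, Rdiv_lt_0_compat; auto. }
  set (Ftot := mu (fun x => 0 <= x < 1)).
  assert (HF : 0 <= Ftot) by (apply meas_nonneg; auto; apply Borel_full).
  set (delta := eps / (2 * (Ftot + 1))).
  assert (Hdel : 0 < delta) by (apply Rdiv_lt_0_compat; lra).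
  assert (HdelF : delta * Ftot <= eps / 2).
  { unfold delta. apply Rmult_le_reg_r with (2 * (Ftot + 1)). lra.
    replace (eps / (2 * (Ftot + 1)) * Ftot * (2 * (Ftot + 1))) with (eps * Ftot) by (field; lra).
    nra. }
  assert (HD2 : 0 < D ^ 2) by (apply pow_lt; lra).
  assert (Hen0 : forall n, 0 <= energy_level mu nu T n).
  { intros n. unfold energy_level. apply sumR_nonneg. intros i _. apply indic_nonneg.
    intros [HT _]. apply Rmult_le_pos. apply pow2_ge_0. apply Rlt_le; auto. }
  destruct (tail_small _ Hen0 Hsum (eps / (2 * D ^ 2))) as [N HN].
  { apply Rdiv_lt_0_compat; lra. }
  set (N0 := Nat.max N kt).
  set (M0 := sumR (S N0) (fun n => sumR (2 ^ n) (fun j => indic (T n j) (ratio mu nu n j)))).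
  assert (HM0 : forall n j, T n j -> (n <= N0)%nat -> ratio mu nu n j <= M0).
  { intros n j HT Hn. unfold M0.
    assert (Hnn : forall n, 0 <= sumR (2 ^ n) (fun j => indic (T n j) (ratio mu nu n j))).
    { intros n'. apply sumR_nonneg. intros. apply indic_nonneg. auto. }
    eapply Rle_trans. 2: { apply (sumR_term (S N0) _ n); auto. lia. }
    cbv beta. rewrite <- (indic_true (T n j) (ratio mu nu n j)) by auto.
    apply (sumR_term _ (fun j => indic (T n j) (ratio mu nu n j))).
    intros; apply indic_nonneg; auto. pose proof (tree_valid _ _ _ _ _ Ht HT). auto. }
  assert (HM0p : 0 <= M0).
  { apply sumR_nonneg. intros. apply sumR_nonneg. intros. apply indic_nonneg. auto. }
  set (c := M0 / delta + M0 + 1).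
  assert (Hc0 : 0 < c).
  { unfold c. assert (0 <= M0 / delta) by (unfold Rdiv; apply Rmult_le_pos; [lra | apply Rlt_le, Rinv_0_lt_compat; lra]). lra. }
  assert (HcM : M0 < c).
  { unfold c. assert (0 <= M0 / delta) by (unfold Rdiv; apply Rmult_le_pos; [lra | apply Rlt_le, Rinv_0_lt_compat; lra]). lra. }
  assert (HdcM : M0 <= delta * c).
  { unfold c. replace (delta * (M0 / delta + M0 + 1)) with (M0 + delta * M0 + delta) by (field; lra).
    assert (0 <= delta * M0) by (apply Rmult_le_pos; lra). lra. }
  exists c. split. lra.
  set (Hd := fun d x => boundary T kt jt x /\ exists n i, (n <= N0 + d)%nat /\ T n i /\ dyad n i x /\ c < ratio mu nu n i).
  assert (HdB : forall d, Borel (Hd d)).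
  { intros d.
    apply Borel_ext with (A := fun x => boundary T kt jt x /\
      exists n i, ((n <= N0 + d)%nat /\ T n i /\ c < ratio mu nu n i) /\ valid n i /\ dyad n i x).
    apply Borel_inter. apply (Borel_boundary _ _ _ Ht). apply Borel_levels.
    intros x; split.
    - intros [H1 [n [i [[H2 [H3 H4]] [_ H5]]]]]. split; auto. exists n, i; auto.
    - intros [H1 [n [i [H2 [H3 [H4 H5]]]]]]. split; auto. exists n, i. split; auto. split; auto.
      eapply tree_valid; eauto. }
  replace (Hc T kt jt mu nu c) with (fun x => exists d, Hd d x).
  2: { apply set_ext; intros x; split.
       - intros [d [H1 [n [i [_ H]]]]]. split; auto. exists n, i; auto.
       - intros [H1 [n [i H]]]. exists n. split; auto. exists n, i. split; auto; lia. }
  apply cont_below_le; auto.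
  { intros d x [H1 [n [i [Hn H]]]]. split; auto. exists n, i. split; auto; lia. }
  intros d.
  rewrite (meas_partition mu N0); auto.
  apply Rle_trans with (sumR (2 ^ N0) (fun j => delta * mu (dyad N0 j) +
                                        D ^ 2 * indic (T N0 j) (en mu nu T c d N0 j))).
  - apply sumR_le. intros j Hj.
    assert (Hv : valid N0 j) by exact Hj.
    pose proof (meas_nonneg mu Hmu _ (Borel_dyad _ _ Hv)).
    destruct (classic (T N0 j)) as [HT|HT].
    + rewrite indic_true by auto.
      apply Rle_trans with (mu (Stop T kt jt mu nu c d N0 j)).
      { apply meas_mono; auto. apply Borel_inter; auto. apply Borel_dyad; auto. apply Borel_Stop; auto.
        intros x [[Hb [n [i [Hn [HTn [Hdn Hr]]]]]] Hdx]. split; auto. split; auto.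
        exists n, i. split; auto.
        destruct (Nat.le_gt_cases n N0) as [Hle|]; [|lia].
        pose proof (HM0 n i HTn Hle). lra. }
      eapply Rle_trans. apply stop_bound; auto.
      pose proof (core T kt jt mu nu D c Ht Hmu Hnu HA HD Hbm Hbn Hc0 d N0 j HT) as Hcore.
      pose proof (HM0 N0 j HT ltac:(lia)).
      assert (mu (dyad N0 j) * ratio mu nu N0 j <= mu (dyad N0 j) * (delta * c)).
      { apply Rmult_le_compat_l; lra. }
      apply Rmult_le_reg_l with c; auto. lra.
    + rewrite indic_false by auto.
      rewrite meas_zero_empty; auto.
      { assert (0 <= delta * mu (dyad N0 j)) by (apply Rmult_le_pos; lra). lra. }
      intros x [[Hb _] Hdx]. destruct (boundary_chain _ _ _ x Ht Hb N0 ltac:(lia)) as [j' [HT' Hd']].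
      apply HT. rewrite (dyad_uniq _ _ _ _ Hdx Hd'). auto.
  - rewrite sumR_plus, sumR_scal, sumR_scal.
    assert (E1 : sumR (2 ^ N0) (fun j => mu (dyad N0 j)) = Ftot).
    { unfold Ftot. rewrite (meas_partition mu N0 _ Hmu Borel_full). apply sumR_ext.
      intros j Hj. f_equal. apply set_ext. intros x; split.
      intros H. split; auto. eapply dyad_01; eauto. intros [_ H]; auto. }
    rewrite E1.
    pose proof (en_sum T kt jt mu nu c Ht Hmu d N0).
    pose proof (HN N0 ltac:(lia) d).
    assert (D ^ 2 * sumR (2 ^ N0) (fun j => indic (T N0 j) (en mu nu T c d N0 j)) <= D ^ 2 * (eps / (2 * D ^ 2))).
    { apply Rmult_le_compat_l; lra. }
    replace (D ^ 2 * (eps / (2 * D ^ 2))) with (eps / 2) in H1 by (field; lra).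
    lra.
Qed.

Lemma le_eps a : (forall eps, 0 < eps -> a <= eps) -> a <= 0.
Proof. intros H. destruct (Rle_dec a 0); auto. specialize (H (a / 2)). lra. Qed.

Lemma open_bound mu nu c U G : finite_measure mu -> finite_measure nu -> 0 <= c -> Open U -> Borel G ->
  (forall k j, valid k j -> mu (inter G (dyad k j)) <= c * nu (dyad k j)) ->
  mu (fun x => U x /\ G x) <= c * nu U.
Proof.
  intros Hmu Hnu Hc HU HG Hb.
  set (Uk := fun k x => exists j, incl (dyad k j) U /\ valid k j /\ dyad k j x).
  assert (HUkB : forall k, Borel (Uk k)) by (intros k; apply Borel_level).
  assert (HUB : Borel U) by (apply Open_Borel; auto).
  assert (HUk : forall k, incl (Uk k) U) by (intros k x [j [Hi [_ Hd]]]; auto).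
  replace (fun x => U x /\ G x) with (fun x => exists k, (fun k x => Uk k x /\ G x) k x).
  2: { apply set_ext; intros x; split.
       - intros [k [H1 H2]]. split; auto. apply (HUk k); auto.
       - intros [H1 H2]. destruct (HU x H1) as [k [j [Hv [Hd Hi]]]]. exists k. split; auto. exists j; auto. }
  apply cont_below_le; auto.
  { intros k. apply Borel_inter; auto. }
  { intros k x [[j [Hi [Hv Hd]]] Hg]. split; auto.
    destruct (valid_children _ _ Hv) as [V1 V2].
    destruct (dyad_child _ _ _ Hd) as [Hc'|Hc']; eexists; (split; [|split; [|apply Hc']]); auto;
      intros y Hy; apply Hi; apply dyad_child_parent; auto. }
  intros k.
  rewrite (meas_partition mu k); [| auto | apply Borel_inter; auto].
  apply Rle_trans with (c * nu (Uk k)).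
  2: { apply Rmult_le_compat_l; auto. apply meas_mono; auto. }
  rewrite (meas_partition nu k); auto. rewrite <- sumR_scal. apply sumR_le.
  intros j Hj. assert (Hv : valid k j) by exact Hj.
  destruct (classic (incl (dyad k j) U)) as [Hi|Hi].
  - replace (inter (Uk k) (dyad k j)) with (dyad k j).
    2: { apply set_ext; intros x; split. intros H. split; auto. exists j; auto. intros [_ H]; auto. }
    eapply Rle_trans. 2: apply Hb; auto.
    apply meas_mono; auto. apply Borel_inter; auto. apply Borel_inter; auto. apply Borel_dyad; auto.
    apply Borel_inter; auto. apply Borel_dyad; auto.
    intros x [[_ Hg] Hd]. split; auto.
  - rewrite meas_zero_empty; auto.
    + apply Rmult_le_pos; auto. apply meas_nonneg; auto. apply Borel_inter; auto. apply Borel_dyad; auto.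
    + intros x [[[j' [Hi' [_ Hd']]] _] Hd]. apply Hi. rewrite (dyad_uniq _ _ _ _ Hd Hd'). auto.
Qed.

Lemma G_bound T kt jt mu nu D c : is_tree T kt jt -> finite_measure mu -> finite_measure nu ->
  0 < mu (dyad kt jt) /\ 0 < nu (dyad kt jt) -> 1 <= D ->
  doubling mu T kt jt D -> doubling nu T kt jt D -> 0 <= c ->
  forall k j, valid k j ->
  mu (inter (fun x => boundary T kt jt x /\ ~ Hc T kt jt mu nu c x) (dyad k j)) <= c * nu (dyad k j).
Proof.
  intros Ht Hmu Hnu HA HD Hbm Hbn Hc0 k j Hv.
  assert (Pn : forall k j, T k j -> 0 < nu (dyad k j)) by (apply (tree_pos T kt jt nu D); tauto).
  set (G := fun x => boundary T kt jt x /\ ~ Hc T kt jt mu nu c x).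
  assert (HGB : Borel G) by (apply Borel_diff; [apply Borel_boundary | apply Borel_Hc]; auto).
  assert (HJ : Borel (dyad k j)) by (apply Borel_dyad; auto).
  assert (Hratio : forall n i x, T n i -> dyad n i x -> G x -> mu (dyad n i) <= c * nu (dyad n i)).
  { intros n i x HT Hd [Hb Hn]. assert (~ c < ratio mu nu n i).
    { intros Hr. apply Hn. split; auto. exists n, i; auto. }
    unfold ratio in H. pose proof (Pn n i HT).
    assert (mu (dyad n i) / nu (dyad n i) * nu (dyad n i) <= c * nu (dyad n i)) by (apply Rmult_le_compat_r; lra).
    replace (mu (dyad n i) / nu (dyad n i) * nu (dyad n i)) with (mu (dyad n i)) in H1 by (field; lra). auto. }
  destruct (classic (exists x, G x /\ dyad k j x)) as [[x [Hg Hd]]|Hno].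
  2: { rewrite meas_zero_empty; auto. apply Rmult_le_pos; auto. apply meas_nonneg; auto.
       intros x [H1 H2]. apply Hno; eauto. }
  destruct (Nat.le_gt_cases kt k) as [Hk|Hk].
  - destruct (boundary_chain _ _ _ x Ht (proj1 Hg) k Hk) as [j' [HT Hd']].
    rewrite (dyad_uniq _ _ _ _ Hd Hd') in *.
    eapply Rle_trans. apply meas_mono with (B := dyad k j'); auto. apply Borel_inter; auto.
    intros y [_ H]; apply H.
    eapply Hratio; eauto.
  - pose proof Ht as [_ [_ [Htop _]]].
    assert (Hx : dyad kt jt x) by apply Hg.
    assert (Hi : incl (dyad kt jt) (dyad k j)) by (eapply dyad_meet; eauto; lia).
    eapply Rle_trans. apply meas_mono with (B := dyad kt jt); auto. apply Borel_inter; auto.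
    apply (Borel_top T); auto. intros y [[[H _] _] _]; auto.
    eapply Rle_trans. eapply Hratio; eauto. apply Rmult_le_compat_l; auto.
    apply meas_mono; auto. apply (Borel_top T); auto.
Qed.

Lemma part2 T kt jt mu nu D : is_tree T kt jt -> finite_measure mu -> finite_measure nu ->
  0 < mu (dyad kt jt) /\ 0 < nu (dyad kt jt) -> 1 <= D ->
  doubling mu T kt jt D -> doubling nu T kt jt D ->
  (exists M, forall n, sumR n (energy_level mu nu T) <= M) ->
  abs_cont (restrict mu (boundary T kt jt)) nu.
Proof.
  intros Ht Hmu Hnu HA HD Hbm Hbn Hsum B HB HnB. unfold restrict.
  assert (HbB : Borel (boundary T kt jt)) by (apply Borel_boundary; auto).
  assert (HB' : Borel (inter B (boundary T kt jt))) by (apply Borel_inter; auto).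
  apply Rle_antisym. 2: apply meas_nonneg; auto.
  apply le_eps. intros eps Heps.
  destruct (Hc_small T kt jt mu nu D Ht Hmu Hnu HA HD Hbm Hbn Hsum (eps / 2)) as [c [Hc0 Hcb]]. lra.
  assert (HHB : Borel (Hc T kt jt mu nu c)) by (apply Borel_Hc; auto).
  set (G := fun x => boundary T kt jt x /\ ~ Hc T kt jt mu nu c x).
  assert (HGB : Borel G) by (apply Borel_diff; auto).
  assert (Hpart : mu (fun x => inter B (boundary T kt jt) x /\ ~ Hc T kt jt mu nu c x) <= 0).
  { apply le_eps. intros eta Heta.
    destruct (regularity nu B (eta / (c + 1)) Hnu HB) as [U [HU [HiU HmU]]].
    { apply Rdiv_lt_0_compat; lra. }
    eapply Rle_trans. apply meas_mono with (B := fun x => U x /\ G x); auto.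
    apply Borel_diff; auto. apply Borel_inter; [apply Open_Borel; auto | auto].
    { intros x Hx. destruct Hx as [[H1 H2] H3]. split; auto. split; auto. }
    eapply Rle_trans. apply (open_bound mu nu c); auto.
    intros k j Hv. apply (G_bound T kt jt mu nu D c); auto.
    rewrite HnB, Rplus_0_l in HmU.
    assert (c * nu U <= c * (eta / (c + 1))) by (apply Rmult_le_compat_l; auto).
    assert (c * (eta / (c + 1)) <= eta).
    { apply Rmult_le_reg_r with (c + 1). lra.
      replace (c * (eta / (c + 1)) * (c + 1)) with (c * eta) by (field; lra). nra. }
    lra. }
  eapply Rle_trans. apply meas_mono with
    (B := fun x => (inter B (boundary T kt jt) x /\ ~ Hc T kt jt mu nu c x) \/ Hc T kt jt mu nu c x); auto.
  apply Borel_union2; auto. apply Borel_diff; auto.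
  { intros x H. destruct (classic (Hc T kt jt mu nu c x)); tauto. }
  eapply Rle_trans. apply meas_sub2; auto. apply Borel_diff; auto. lra.
Qed.

Definition Lam (T : nat -> nat -> Prop) k : R -> Prop := fun x => exists j, leaf T k j /\ valid k j /\ dyad k j x.

Lemma leaf_lt_false T kt jt k j k' j' x : is_tree T kt jt -> leaf T k j -> leaf T k' j' ->
  dyad k j x -> dyad k' j' x -> (k < k')%nat -> False.
Proof.
  intros Ht [HT [N1 N2]] [HT' _] Hd Hd' Hk.
  pose proof Ht as [_ [Hc _]].
  pose proof (tree_valid _ _ _ _ _ Ht HT) as Hv. destruct (valid_children _ _ Hv) as [V1 V2].
  destruct (dyad_child _ _ _ Hd) as [Hx|Hx].
  - apply N1. apply (Hc k' j' k j); auto.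
    + eapply dyad_meet; eauto; lia.
    + intros y Hy. apply dyad_child_parent; auto.
  - apply N2. apply (Hc k' j' k j); auto.
    + eapply dyad_meet; eauto; lia.
    + intros y Hy. apply dyad_child_parent; auto.
Qed.

Lemma Lam_disj T kt jt k k' x : is_tree T kt jt -> k <> k' -> Lam T k x -> Lam T k' x -> False.
Proof.
  intros Ht Hk [j [Hl [_ Hd]]] [j' [Hl' [_ Hd']]].
  destruct (Nat.lt_total k k') as [H|[H|H]]; try lia.
  exact (leaf_lt_false T kt jt k j k' j' x Ht Hl Hl' Hd Hd' H).
  exact (leaf_lt_false T kt jt k' j' k j x Ht Hl' Hl Hd' Hd H).
Qed.

Lemma conv_bounded a M : (forall n, 0 <= a n) -> (forall n, sum_f_R0 a n <= M) -> exists l, infinite_sum a l.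
Proof.
  intros Ha HM.
  set (E := fun y => exists n, y = sum_f_R0 a n).
  destruct (completeness E) as [L [HL1 HL2]].
  { exists M. intros y [n ->]. auto. }
  { exists (sum_f_R0 a 0). exists O. auto. }
  exists L. intros eps Heps.
  assert (exists N, L - eps < sum_f_R0 a N).
  { apply NNPP. intros C. assert (L <= L - eps). apply HL2. intros y [n ->].
    destruct (Rlt_le_dec (L - eps) (sum_f_R0 a n)); auto. exfalso; apply C; eauto. lra. }
  destruct H as [N HN]. exists N. intros n Hn.
  assert (sum_f_R0 a n <= L) by (apply HL1; eexists; eauto).
  assert (sum_f_R0 a N <= sum_f_R0 a n).
  { rewrite !sum_f_R0_sumR. apply sumR_mono_n; auto. lia. }
  unfold R_dist. apply Rabs_def1; lra.
Qed.

Lemma infsum_ge a l : infinite_sum a l -> (forall n, 0 <= a n) -> forall n, sum_f_R0 a n <= l.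
Proof.
  intros Hs Ha n. destruct (Rle_dec (sum_f_R0 a n) l); auto.
  destruct (Hs (sum_f_R0 a n - l)) as [N HN]. lra.
  specialize (HN (n + N)%nat ltac:(lia)).
  assert (sum_f_R0 a n <= sum_f_R0 a (n + N)).
  { rewrite !sum_f_R0_sumR. apply sumR_mono_n; auto. lia. }
  unfold R_dist in HN. apply Rabs_def2 in HN. lra.
Qed.

Lemma part1 T kt jt mu nu D : is_tree T kt jt -> finite_measure mu -> finite_measure nu ->
  0 < mu (dyad kt jt) /\ 0 < nu (dyad kt jt) -> 1 <= D ->
  doubling mu T kt jt D -> doubling nu T kt jt D ->
  (exists M, forall n, sumR n (energy_level mu nu T) <= M) ->
  abs_cont (restrict mu (dyad kt jt)) (nuT mu nu T kt jt).
Proof.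
  intros Ht Hmu Hnu HA HD Hbm Hbn Hsum B HB H0. unfold restrict, nuT in *.
  assert (Pm : forall k j, T k j -> 0 < mu (dyad k j)) by (apply (tree_pos T kt jt mu D); tauto).
  assert (Pn : forall k j, T k j -> 0 < nu (dyad k j)) by (apply (tree_pos T kt jt nu D); tauto).
  assert (HbB : Borel (boundary T kt jt)) by (apply Borel_boundary; auto).
  assert (HLam : forall k, Borel (Lam T k)) by (intros k; apply Borel_level).
  assert (HBJ : forall k j, valid k j -> Borel (inter B (dyad k j))) by (intros; apply Borel_inter; auto; apply Borel_dyad; auto).
  set (L := fun k => sumR (2 ^ k) (fun j => indic (leaf T k j) (nu (dyad k j) / mu (dyad k j) * mu (inter B (dyad k j))))).
  change (nu (inter B (boundary T kt jt)) + series L = 0) in H0.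
  assert (Hterm : forall k j, leaf T k j -> 0 <= nu (dyad k j) / mu (dyad k j) * mu (inter B (dyad k j))).
  { intros k j [HT _]. apply Rmult_le_pos. apply Rlt_le, Rdiv_lt_0_compat; auto.
    apply meas_nonneg; auto. apply HBJ. eapply tree_valid; eauto. }
  assert (HL0 : forall k, 0 <= L k).
  { intros k. apply sumR_nonneg. intros. apply indic_nonneg. auto. }
  assert (HLle : forall k, L k <= nu (Lam T k)).
  { intros k. rewrite (meas_partition nu k); auto. apply sumR_le. intros j Hj.
    assert (Hv : valid k j) by exact Hj.
    destruct (classic (leaf T k j)) as [Hl|Hl].
    - rewrite indic_true by auto.
      replace (inter (Lam T k) (dyad k j)) with (dyad k j).
      2: { apply set_ext; intros x; split. intros H. split; auto. exists j; auto. intros [_ H]; auto. }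
      pose proof (Pm k j (proj1 Hl)). pose proof (Pn k j (proj1 Hl)).
      assert (mu (inter B (dyad k j)) <= mu (dyad k j)).
      { apply meas_mono; auto. apply Borel_dyad; auto. intros x [_ H']; auto. }
      assert (nu (dyad k j) / mu (dyad k j) * mu (inter B (dyad k j)) <= nu (dyad k j) / mu (dyad k j) * mu (dyad k j)).
      { apply Rmult_le_compat_l; auto. apply Rlt_le, Rdiv_lt_0_compat; auto. }
      replace (nu (dyad k j) / mu (dyad k j) * mu (dyad k j)) with (nu (dyad k j)) in H3 by (field; lra). auto.
    - rewrite indic_false by auto. apply meas_nonneg; auto. apply Borel_inter; auto. apply Borel_dyad; auto. }
  assert (HLsum : forall n, sum_f_R0 L n <= nu (fun x => 0 <= x < 1)).
  { intros n. rewrite sum_f_R0_sumR. eapply Rle_trans. apply sumR_le. intros i _. apply HLle.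
    rewrite <- meas_finadd; auto.
    - apply meas_mono; auto. apply Borel_finunion; auto. apply Borel_full.
      intros x [i [_ [j [_ [Hv Hd]]]]]. eapply dyad_01; eauto.
    - intros i p x _ _ Hip H1 H2. eapply Lam_disj; eauto. }
  destruct (conv_bounded L _ HL0 HLsum) as [l Hlim].
  assert (Hser : infinite_sum L (series L)) by (unfold series; apply epsilon_spec; eauto).
  assert (HS0 : 0 <= series L).
  { pose proof (infsum_ge _ _ Hser HL0 0). simpl in H. pose proof (HL0 0%nat). lra. }
  assert (Hnb : 0 <= nu (inter B (boundary T kt jt))) by (apply meas_nonneg; auto; apply Borel_inter; auto).
  assert (Hnb0 : nu (inter B (boundary T kt jt)) = 0) by lra.
  assert (HS : series L = 0) by lra.
  assert (Hmb : mu (inter B (boundary T kt jt)) = 0).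
  { pose proof (part2 T kt jt mu nu D Ht Hmu Hnu HA HD Hbm Hbn Hsum (inter B (boundary T kt jt))
                  ltac:(apply Borel_inter; auto) Hnb0) as P. unfold restrict in P.
    rewrite <- P. f_equal. apply set_ext; intros x. unfold inter. tauto. }
  assert (Hleaf : forall k j, leaf T k j -> mu (inter B (dyad k j)) = 0).
  { intros k j Hl. pose proof (tree_valid _ _ _ _ _ Ht (proj1 Hl)) as Hv.
    assert (L k <= 0).
    { rewrite <- HS. eapply Rle_trans. 2: apply (infsum_ge _ _ Hser HL0 k).
      rewrite sum_f_R0_sumR. apply (sumR_term (S k) L k); auto. }
    assert (indic (leaf T k j) (nu (dyad k j) / mu (dyad k j) * mu (inter B (dyad k j))) <= L k).
    { apply (sumR_term _ (fun j => indic (leaf T k j) (nu (dyad k j) / mu (dyad k j) * mu (inter B (dyad k j))))).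
      intros; apply indic_nonneg; auto. exact Hv. }
    rewrite indic_true in H1 by auto.
    pose proof (Pm k j (proj1 Hl)). pose proof (Pn k j (proj1 Hl)).
    assert (0 < nu (dyad k j) / mu (dyad k j)) by (apply Rdiv_lt_0_compat; auto).
    assert (0 <= mu (inter B (dyad k j))) by (apply meas_nonneg; auto).
    nra. }
  assert (HBL : Borel (leaves_union T)) by (eapply Borel_leaves; eauto).
  assert (Hml : mu (fun x => B x /\ leaves_union T x) <= 0).
  { replace (fun x => B x /\ leaves_union T x) with
      (fun x => exists N, (fun N x => exists k, (k < N)%nat /\ (B x /\ Lam T k x)) N x).
    2: { apply set_ext; intros x; split.
         - intros [N [k [_ [H1 [j [Hl [_ Hd]]]]]]]. split; auto. exists k, j; auto.
         - intros [H1 [k [j [Hl Hd]]]]. exists (S k), k. split; auto. split; auto. exists j.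
           split; auto. split; auto. eapply tree_valid; eauto. apply Hl. }
    apply cont_below_le; auto.
    - intros N. apply Borel_finunion. intros. apply Borel_inter; auto.
    - intros N x [k [Hk H]]. exists k. split; auto.
    - intros N. eapply Rle_trans. apply meas_finsub; auto. intros; apply Borel_inter; auto.
      apply Rle_trans with (sumR N (fun _ => 0)).
      2: { right. clear. induction N; simpl; lra. }
      apply sumR_le. intros k _.
      rewrite (meas_partition mu k); [|auto|apply Borel_inter; auto].
      apply Rle_trans with (sumR (2 ^ k) (fun _ => 0)).
      2: { right. clear. induction (2 ^ k)%nat; simpl; lra. }
      apply sumR_le. intros j Hj. assert (Hv : valid k j) by exact Hj.
      destruct (classic (leaf T k j)) as [Hl|Hl].
      + rewrite <- (Hleaf k j Hl). apply meas_mono; auto. apply Borel_inter; auto.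
        apply Borel_inter; auto. apply Borel_dyad; auto.
        intros x [[H1 _] H2]. split; auto.
      + right. apply meas_zero_empty; auto. intros x [[_ [j' [Hl' [_ Hd']]]] Hd].
        apply Hl. rewrite (dyad_uniq _ _ _ _ Hd Hd'). auto. }
  apply Rle_antisym.
  2: { apply meas_nonneg; auto. apply Borel_inter; auto. apply (Borel_top T); auto. }
  eapply Rle_trans. apply meas_mono with
    (B := fun x => inter B (boundary T kt jt) x \/ (B x /\ leaves_union T x)); auto.
  apply Borel_inter; auto. apply (Borel_top T); auto.
  apply Borel_union2. apply Borel_inter; auto. apply Borel_inter; auto.
  { intros x [H1 H2]. destruct (classic (leaves_union T x)). right; auto. left. split; auto. split; auto. }
  eapply Rle_trans. apply meas_sub2; auto. apply Borel_inter; auto. apply Borel_inter; auto.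
  lra.
Qed.

Theorem mainTheorem7
  (T : nat -> nat -> Prop) (kt jt : nat)
  (mu nu : (R -> Prop) -> R) (D : R)
  (Htree : is_tree T kt jt)
  (Hmu : finite_measure mu) (Hnu : finite_measure nu)
  (HA : 0 < mu (dyad kt jt) /\ 0 < nu (dyad kt jt))
  (HD : 1 <= D)
  (HBmu : doubling mu T kt jt D) (HBnu : doubling nu T kt jt D)
  (Hsum : exists M, forall n, sumR n (energy_level mu nu T) <= M) :
  abs_cont (restrict mu (dyad kt jt)) (nuT mu nu T kt jt) /\
  abs_cont (restrict mu (boundary T kt jt)) nu.
Proof.
  split.
  - eapply part1; eauto.
  - eapply part2; eauto.
Qed.
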